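(* Let $K_1\subset\mathbb C$ and $K_2\subset\mathbb C^m$ be compact sets. Under the identification $F\mapsto(x\mapsto F(x,\cdot))$ of $C(K_1\times K_2)$ with $C(K_1,C(K_2))$, we have \[ A_D(K_1\times K_2)\subset A\big(K_1,A_D(K_2)\big); \] that is, for every $F\in A_D(K_1\times K_2)$ and every $x\in K_1$ the function $F(x,\cdot)$ belongs to $A_D(K_2)$, and the map $x\mapsto F(x,\cdot)$ from $K_1$ to the Banach space $A_D(K_2)$ is continuous on $K_1$ and holomorphic on $K_1^\circ$.
   Context: For a compact $K\subset\mathbb C^n$, $A_D(K)$ is the set of continuous functions $f:K\to\mathbb C$ such that for every open disc $D\subset\mathbb C$ and every injective holomorphic mapping $\phi:D\to\mathbb C^n$ with $\phi(D)\subset K$, $f\circ\phi$ is holomorphic on $D$; it is a Banach space under the supremum norm. For a planar compact $K_1$ and a Banach space $W$, $A(K_1,W)$ is the space of continuous maps $K_1\to W$ that are holomorphic (as $W$-valued functions) on the interior $K_1^\circ$. *)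

(* Defs.v *)
From Stdlib Require Import Reals Lra List.
From Stdlib Require Fin.
Open Scope R_scope.

Definition Cx : Type := (R * R)%type.
Definition Cadd (z w : Cx) : Cx := (fst z + fst w, snd z + snd w).
Definition Csub (z w : Cx) : Cx := (fst z - fst w, snd z - snd w).
Definition Cmul (z w : Cx) : Cx :=
  (fst z * fst w - snd z * snd w, fst z * snd w + snd z * fst w).
Definition Cinv (z : Cx) : Cx :=
  (fst z / (fst z ^ 2 + snd z ^ 2), - snd z / (fst z ^ 2 + snd z ^ 2)).
Definition Cdiv (z w : Cx) : Cx := Cmul z (Cinv w).
Definition Cabs (z : Cx) : R := sqrt (fst z ^ 2 + snd z ^ 2).

Definition Vec (n : nat) : Type := Fin.t n -> Cx.

(* (x, y) in C x C^m  |->  point of Cx^(1+m) *)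
Definition vcons {m : nat} (x : Cx) (y : Vec m) : Vec (S m) :=
  fun i => Fin.caseS' i (fun _ => Cx) x y.

Definition is_open {X : Type} (ball : X -> R -> X -> Prop) (U : X -> Prop) : Prop :=
  forall x, U x -> exists r, 0 < r /\ forall y, ball x r y -> U y.

Definition compact_in {X : Type} (ball : X -> R -> X -> Prop) (K : X -> Prop) : Prop :=
  forall (I : Type) (U : I -> X -> Prop),
    (forall i, is_open ball (U i)) ->
    (forall x, K x -> exists i, U i x) ->
    exists l : list I, forall x, K x -> exists i, In i l /\ U i x.

Definition ballC (c : Cx) (r : R) (z : Cx) : Prop := Cabs (Csub z c) < r.
(* sup-norm balls in C^n (same topology as the Euclidean one) *)
Definition ballV {n : nat} (c : Vec n) (r : R) (z : Vec n) : Prop :=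
  forall i, Cabs (Csub (z i) (c i)) < r.

Definition compactC (K : Cx -> Prop) : Prop := compact_in ballC K.
Definition compactV {n : nat} (K : Vec n -> Prop) : Prop := compact_in (@ballV n) K.

Definition interiorC (K : Cx -> Prop) (x : Cx) : Prop :=
  exists r, 0 < r /\ forall z, ballC x r z -> K z.

Definition holo_on (U : Cx -> Prop) (f : Cx -> Cx) : Prop :=
  forall z0, U z0 -> exists l : Cx, forall eps, 0 < eps -> exists delta, 0 < delta /\
    forall z, U z -> 0 < Cabs (Csub z z0) < delta ->
      Cabs (Csub (Cdiv (Csub (f z) (f z0)) (Csub z z0)) l) < eps.

Definition holoV_on {n : nat} (U : Cx -> Prop) (phi : Cx -> Vec n) : Prop :=
  forall i, holo_on U (fun z => phi z i).

Definition injective_on {A B : Type} (U : A -> Prop) (f : A -> B) : Prop :=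
  forall a b, U a -> U b -> f a = f b -> a = b.

Definition continuous_on {n : nat} (K : Vec n -> Prop) (f : Vec n -> Cx) : Prop :=
  forall x, K x -> forall eps, 0 < eps -> exists delta, 0 < delta /\
    forall y, K y -> ballV x delta y -> Cabs (Csub (f y) (f x)) < eps.

Definition A_D {n : nat} (K : Vec n -> Prop) (f : Vec n -> Cx) : Prop :=
  continuous_on K f /\
  forall (c : Cx) (r : R) (phi : Cx -> Vec n),
    0 < r ->
    holoV_on (ballC c r) phi ->
    injective_on (ballC c r) phi ->
    (forall z, ballC c r z -> K (phi z)) ->
    holo_on (ballC c r) (fun z => f (phi z)).

Definition prodset {m : nat} (K1 : Cx -> Prop) (K2 : Vec m -> Prop) : Vec (S m) -> Prop :=
  fun p => exists x y, p = vcons x y /\ K1 x /\ K2 y.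

(* Main.v *)
From Pilot Require Import Defs.
From Stdlib Require Import Reals.
Open Scope R_scope.
From Stdlib Require Import Lra Lia ZArith List FunctionalExtensionality.
From Coquelicot Require Import Coquelicot.
Open Scope R_scope.

Notation CInt := (@RInt C_R_CompleteNormedModule).
Notation exC := (@ex_RInt C_R_NormedModule).

Definition Cc (f : C -> C) (p : C) : Prop :=
  forall eps, 0 < eps -> exists delta, 0 < delta /\
    forall z, Cmod (z - p) < delta -> Cmod (f z - f p) < eps.

Definition Dz (f : C -> C) (p l : C) : Prop :=
  forall eps, 0 < eps -> exists delta, 0 < delta /\
    forall z, Cmod (z - p) < delta -> Cmod (f z - f p - l * (z - p)) <= eps * Cmod (z - p).

Lemma pair_sub_h (s t y : R) : ((s, y) - (t, y))%C = RtoC (s - t).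
Proof. unfold Cminus, Cplus, Copp, RtoC; simpl; f_equal; ring. Qed.
Lemma pair_sub_v (s t x : R) : ((x, s) - (x, t))%C = (Ci * RtoC (s - t))%C.
Proof. unfold Cminus, Cplus, Copp, RtoC, Ci, Cmult; simpl; f_equal; ring. Qed.

Lemma cont_of_Cc (h : R -> C) (t : R) :
  (forall eps, 0 < eps -> exists delta, 0 < delta /\ forall s, Rabs (s - t) < delta -> Cmod (h s - h t) < eps) ->
  continuous h t.
Proof.
  intros H. apply filterlim_locally. intros eps.
  destruct (H eps (cond_pos eps)) as [d [Hd Hz]].
  exists (mkposreal d Hd). intros s Hs.
  apply C_NormedModule_mixin_compat1. apply Hz. exact Hs.
Qed.

Lemma Cc_cont_h (g : C -> C) (t y : R) : Cc g (t, y) ->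
  continuous (fun s => g (s, y)) t.
Proof.
  intros H. apply cont_of_Cc. intros eps Heps.
  destruct (H eps Heps) as [d [Hd Hz]]. exists d; split; auto.
  intros s Hs. apply Hz. rewrite pair_sub_h, Cmod_R. exact Hs.
Qed.

Lemma Cc_cont_v (g : C -> C) (t x : R) : Cc g (x, t) ->
  continuous (fun s => g (x, s)) t.
Proof.
  intros H. apply cont_of_Cc. intros eps Heps.
  destruct (H eps Heps) as [d [Hd Hz]]. exists d; split; auto.
  intros s Hs. apply Hz. rewrite pair_sub_v, Cmod_mult, Cmod_Ci, Cmod_R. lra.
Qed.

Lemma minus_C (u v : C) : minus u v = (u - v)%C.
Proof. reflexivity. Qed.
Lemma plus_C (u v : C) : plus u v = (u + v)%C.
Proof. reflexivity. Qed.
Lemma scal_C (r : R) (v : C) : scal r v = (RtoC r * v)%C.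
Proof. unfold scal; simpl. unfold prod_scal, Cmult, RtoC; simpl. f_equal; unfold scal; simpl; unfold mult; simpl; ring. Qed.

Lemma is_RInt_Cmult (h : R -> C) (k : C) a b (l : C) :
  @is_RInt C_R_NormedModule h a b l -> @is_RInt C_R_NormedModule (fun t => (k * h t)%C) a b (k * l)%C.
Proof.
  intros H.
  pose proof (is_RInt_fct_extend_fst _ _ _ _ H) as H1.
  pose proof (is_RInt_fct_extend_snd _ _ _ _ H) as H2.
  simpl in H1, H2.
  apply (is_RInt_fct_extend_pair (U:=R_NormedModule) (V:=R_NormedModule)); simpl.
  - apply (is_RInt_minus (V:=R_NormedModule)).
    + apply (is_RInt_scal (V:=R_NormedModule) _ _ _ (fst k) _ H1).
    + apply (is_RInt_scal (V:=R_NormedModule) _ _ _ (snd k) _ H2).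
  - apply (is_RInt_plus (V:=R_NormedModule)).
    + apply (is_RInt_scal (V:=R_NormedModule) _ _ _ (fst k) _ H2).
    + apply (is_RInt_scal (V:=R_NormedModule) _ _ _ (snd k) _ H1).
Qed.

Lemma RInt_Cmult (h : R -> C) (k : C) a b : exC h a b ->
  CInt (fun t => (k * h t)%C) a b = (k * CInt h a b)%C.
Proof.
  intros H. apply is_RInt_unique. apply is_RInt_Cmult. apply (RInt_correct (V:=C_R_CompleteNormedModule)). exact H.
Qed.

Lemma ex_RInt_Cmult (h : R -> C) (k : C) a b : exC h a b ->
  exC (fun t => (k * h t)%C) a b.
Proof. intros H. eexists. apply is_RInt_Cmult. apply (RInt_correct (V:=C_R_CompleteNormedModule)). exact H. Qed.

Lemma RInt_Cplus (f g : R -> C) a b : exC f a b -> exC g a b ->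
  CInt (fun t => (f t + g t)%C) a b = (CInt f a b + CInt g a b)%C.
Proof. intros. apply (RInt_plus (V:=C_R_CompleteNormedModule) f g a b); auto. Qed.

Lemma RInt_Cminus (f g : R -> C) a b : exC f a b -> exC g a b ->
  CInt (fun t => (f t - g t)%C) a b = (CInt f a b - CInt g a b)%C.
Proof. intros. apply (RInt_minus (V:=C_R_CompleteNormedModule) f g a b); auto. Qed.

Lemma ex_RInt_Cplus (f g : R -> C) a b : exC f a b -> exC g a b ->
  exC (fun t => (f t + g t)%C) a b.
Proof. intros. apply (ex_RInt_plus (V:=C_R_NormedModule) f g a b); auto. Qed.

Lemma ex_RInt_Cminus (f g : R -> C) a b : exC f a b -> exC g a b ->
  exC (fun t => (f t - g t)%C) a b.
Proof. intros. apply (ex_RInt_minus (V:=C_R_NormedModule) f g a b); auto. Qed.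

Lemma RInt_Cconst a b (k : C) : CInt (fun _ => k) a b = (RtoC (b - a) * k)%C.
Proof. rewrite (RInt_const (V:=C_R_CompleteNormedModule)). apply scal_C. Qed.

Lemma RInt_Cbound (h : R -> C) a b M : a <= b -> exC h a b ->
  (forall t, a <= t <= b -> Cmod (h t) <= M) -> Cmod (CInt h a b) <= (b - a) * M.
Proof.
  intros Hab Hex HM. rewrite Cmod_norm.
  apply (norm_RInt_le_const (V:=C_R_NormedModule) h a b); auto.
  - intros t Ht. rewrite <- Cmod_norm. auto.
  - apply (RInt_correct (V:=C_R_CompleteNormedModule)). auto.
Qed.

Lemma ex_h (g : C -> C) a b y : a <= b -> (forall x, a <= x <= b -> Cc g (x, y)) ->
  exC (fun t => g (t, y)) a b.
Proof.
  intros Hab H. apply (ex_RInt_continuous (V:=C_R_CompleteNormedModule)). intros z Hz.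
  rewrite Rmin_left in Hz by lra. rewrite Rmax_right in Hz by lra.
  apply Cc_cont_h. auto.
Qed.
Lemma ex_v (g : C -> C) c d x : c <= d -> (forall y, c <= y <= d -> Cc g (x, y)) ->
  exC (fun t => g (x, t)) c d.
Proof.
  intros Hab H. apply (ex_RInt_continuous (V:=C_R_CompleteNormedModule)). intros z Hz.
  rewrite Rmin_left in Hz by lra. rewrite Rmax_right in Hz by lra.
  apply Cc_cont_v. auto.
Qed.

Definition RI (g : C -> C) a b c d : C :=
  (CInt (fun t => g (t, c)) a b - CInt (fun t => g (t, d)) a b +
   Ci * (CInt (fun t => g (b, t)) c d - CInt (fun t => g (a, t)) c d))%C.

Definition onB a b c d (z : C) : Prop :=
  (a <= fst z <= b /\ (snd z = c \/ snd z = d)) \/ (c <= snd z <= d /\ (fst z = a \/ fst z = b)).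

Definition BC (g : C -> C) a b c d : Prop := forall z, onB a b c d z -> Cc g z.

Lemma BC_h (g : C -> C) a b c d x : BC g a b c d -> a <= x <= b -> Cc g (x, c) /\ Cc g (x, d).
Proof. intros H Hx; split; apply H; left; simpl; auto. Qed.
Lemma BC_v (g : C -> C) a b c d y : BC g a b c d -> c <= y <= d -> Cc g (a, y) /\ Cc g (b, y).
Proof. intros H Hy; split; apply H; right; simpl; auto. Qed.

Lemma BC_ex (g : C -> C) a b c d : a <= b -> c <= d -> BC g a b c d ->
  exC (fun t => g (t, c)) a b /\ exC (fun t => g (t, d)) a b /\
  exC (fun t => g (b, t)) c d /\ exC (fun t => g (a, t)) c d.
Proof.
  intros Hab Hcd H. repeat split.
  - apply ex_h; auto. intros; apply (BC_h g a b c d); auto.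
  - apply ex_h; auto. intros; apply (BC_h g a b c d); auto.
  - apply ex_v; auto. intros; apply (BC_v g a b c d); auto.
  - apply ex_v; auto. intros; apply (BC_v g a b c d); auto.
Qed.

Lemma RI_plus (g1 g2 : C -> C) a b c d : a <= b -> c <= d -> BC g1 a b c d -> BC g2 a b c d ->
  RI (fun z => g1 z + g2 z)%C a b c d = (RI g1 a b c d + RI g2 a b c d)%C.
Proof.
  intros Hab Hcd H1 H2.
  destruct (BC_ex g1 a b c d Hab Hcd H1) as [A1 [A2 [A3 A4]]].
  destruct (BC_ex g2 a b c d Hab Hcd H2) as [B1 [B2 [B3 B4]]].
  unfold RI. rewrite !RInt_Cplus by auto. ring.
Qed.

Lemma RI_minus (g1 g2 : C -> C) a b c d : a <= b -> c <= d -> BC g1 a b c d -> BC g2 a b c d ->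
  RI (fun z => g1 z - g2 z)%C a b c d = (RI g1 a b c d - RI g2 a b c d)%C.
Proof.
  intros Hab Hcd H1 H2.
  destruct (BC_ex g1 a b c d Hab Hcd H1) as [A1 [A2 [A3 A4]]].
  destruct (BC_ex g2 a b c d Hab Hcd H2) as [B1 [B2 [B3 B4]]].
  unfold RI. rewrite !RInt_Cminus by auto. ring.
Qed.

Lemma RI_scal (g : C -> C) (k : C) a b c d : a <= b -> c <= d -> BC g a b c d ->
  RI (fun z => k * g z)%C a b c d = (k * RI g a b c d)%C.
Proof.
  intros Hab Hcd H1.
  destruct (BC_ex g a b c d Hab Hcd H1) as [A1 [A2 [A3 A4]]].
  unfold RI. rewrite !RInt_Cmult by auto. ring.
Qed.

Lemma RI_ext (g1 g2 : C -> C) a b c d : a <= b -> c <= d ->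
  (forall z, onB a b c d z -> g1 z = g2 z) -> RI g1 a b c d = RI g2 a b c d.
Proof.
  intros Hab Hcd H. unfold RI.
  rewrite (RInt_ext (V:=C_R_CompleteNormedModule) (fun t => g1 (t, c)) (fun t => g2 (t, c))).
  rewrite (RInt_ext (V:=C_R_CompleteNormedModule) (fun t => g1 (t, d)) (fun t => g2 (t, d))).
  rewrite (RInt_ext (V:=C_R_CompleteNormedModule) (fun t => g1 (b, t)) (fun t => g2 (b, t))).
  rewrite (RInt_ext (V:=C_R_CompleteNormedModule) (fun t => g1 (a, t)) (fun t => g2 (a, t))). reflexivity.
  all: intros x Hx; rewrite ?Rmin_left, ?Rmax_right in Hx by lra; apply H;
    unfold onB; simpl; lra.
Qed.

Lemma RI_bound (g : C -> C) a b c d M : a <= b -> c <= d -> BC g a b c d ->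
  (forall z, onB a b c d z -> Cmod (g z) <= M) ->
  Cmod (RI g a b c d) <= 2 * M * ((b - a) + (d - c)).
Proof.
  intros Hab Hcd H HM.
  destruct (BC_ex g a b c d Hab Hcd H) as [A1 [A2 [A3 A4]]].
  unfold RI.
  assert (E1 : Cmod (CInt (fun t => g (t, c)) a b) <= (b - a) * M).
  { apply RInt_Cbound; auto. intros; apply HM; unfold onB; simpl; lra. }
  assert (E2 : Cmod (CInt (fun t => g (t, d)) a b) <= (b - a) * M).
  { apply RInt_Cbound; auto. intros; apply HM; unfold onB; simpl; lra. }
  assert (E3 : Cmod (CInt (fun t => g (b, t)) c d) <= (d - c) * M).
  { apply RInt_Cbound; auto. intros; apply HM; unfold onB; simpl; lra. }
  assert (E4 : Cmod (CInt (fun t => g (a, t)) c d) <= (d - c) * M).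
  { apply RInt_Cbound; auto. intros; apply HM; unfold onB; simpl; lra. }
  eapply Rle_trans. apply Cmod_triangle.
  rewrite Cmod_mult, Cmod_Ci, Rmult_1_l.
  eapply Rle_trans. apply Rplus_le_compat. apply Cmod_triangle. apply Cmod_triangle.
  rewrite !Cmod_opp. lra.
Qed.

Lemma RI_split_x (g : C -> C) a m b c d : a <= m <= b -> c <= d ->
  BC g a m c d -> BC g m b c d ->
  RI g a b c d = (RI g a m c d + RI g m b c d)%C.
Proof.
  intros Hm Hcd H1 H2.
  destruct (BC_ex g a m c d ltac:(lra) Hcd H1) as [A1 [A2 [A3 A4]]].
  destruct (BC_ex g m b c d ltac:(lra) Hcd H2) as [B1 [B2 [B3 B4]]].
  unfold RI.
  rewrite <- (RInt_Chasles (V:=C_R_CompleteNormedModule) (fun t => g (t, c)) a m b) by auto.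
  rewrite <- (RInt_Chasles (V:=C_R_CompleteNormedModule) (fun t => g (t, d)) a m b) by auto.
  set (P1 := CInt _ a m) ; set (P2 := CInt _ m b); set (P3 := CInt _ a m); set (P4 := CInt _ m b).
  change (plus P1 P2) with (P1 + P2)%C. change (plus P3 P4) with (P3 + P4)%C. ring.
Qed.

Lemma RI_split_y (g : C -> C) a b c m d : a <= b -> c <= m <= d ->
  BC g a b c m -> BC g a b m d ->
  RI g a b c d = (RI g a b c m + RI g a b m d)%C.
Proof.
  intros Hab Hm H1 H2.
  destruct (BC_ex g a b c m Hab ltac:(lra) H1) as [A1 [A2 [A3 A4]]].
  destruct (BC_ex g a b m d Hab ltac:(lra) H2) as [B1 [B2 [B3 B4]]].
  unfold RI.
  rewrite <- (RInt_Chasles (V:=C_R_CompleteNormedModule) (fun t => g (b, t)) c m d) by auto.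
  rewrite <- (RInt_Chasles (V:=C_R_CompleteNormedModule) (fun t => g (a, t)) c m d) by auto.
  set (P1 := CInt (fun t => g (b, t)) c m) ; set (P2 := CInt (fun t => g (b, t)) m d); set (P3 := CInt (fun t => g (a, t)) c m); set (P4 := CInt (fun t => g (a, t)) m d).
  change (plus P1 P2) with (P1 + P2)%C. change (plus P3 P4) with (P3 + P4)%C. ring.
Qed.

Lemma Cmod_sub_sym (z w : C) : Cmod (z - w) = Cmod (w - z).
Proof. replace (z - w)%C with (- (w - z))%C by ring. apply Cmod_opp. Qed.

Lemma Dz_cont (f : C -> C) p l : Dz f p l -> Cc f p.
Proof.
  intros H eps Heps.
  destruct (H 1 Rlt_0_1) as [d [Hd Hz]].
  pose proof (Cmod_ge_0 l) as Hl.
  exists (Rmin d (eps / (Cmod l + 1))). split.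
  { apply Rmin_pos; auto. apply Rdiv_lt_0_compat; lra. }
  intros z Hzp.
  assert (Hz1 : Cmod (z - p) < d) by (eapply Rlt_le_trans; [exact Hzp|apply Rmin_l]).
  assert (Hz2 : Cmod (z - p) < eps / (Cmod l + 1)) by (eapply Rlt_le_trans; [exact Hzp|apply Rmin_r]).
  specialize (Hz z Hz1).
  replace (f z - f p)%C with ((f z - f p - l * (z - p)) + l * (z - p))%C by ring.
  eapply Rle_lt_trans. apply Cmod_triangle. rewrite Cmod_mult.
  pose proof (Cmod_ge_0 (z - p)).
  assert (Cmod (z - p) * (Cmod l + 1) < eps).
  { apply Rmult_lt_compat_r with (r := Cmod l + 1) in Hz2; [|lra].
    unfold Rdiv in Hz2. rewrite Rmult_assoc, Rinv_l, Rmult_1_r in Hz2 by lra. lra. }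
  lra.
Qed.

Lemma sq_abs (x : R) : x ^ 2 = Rabs x * Rabs x.
Proof. pose proof (Rsqr_abs x). unfold Rsqr in H. simpl. lra. Qed.

Lemma Cmod_le_sum (z : C) : Cmod z <= Rabs (fst z) + Rabs (snd z).
Proof.
  unfold Cmod. destruct z as [x y]; simpl.
  rewrite <- (sqrt_pow2 (Rabs x + Rabs y)) by (pose proof (Rabs_pos x); pose proof (Rabs_pos y); lra).
  apply sqrt_le_1_alt.
  pose proof (Rabs_pos x); pose proof (Rabs_pos y).
  simpl. pose proof (sq_abs x); pose proof (sq_abs y). simpl in *. nra.
Qed.

Lemma Cmod_ge_fst (z : C) : Rabs (fst z) <= Cmod z.
Proof. pose proof (Rmax_Cmod z). pose proof (Rmax_l (Rabs (fst z)) (Rabs (snd z))). lra. Qed.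
Lemma Cmod_ge_snd (z : C) : Rabs (snd z) <= Cmod z.
Proof. pose proof (Rmax_Cmod z). pose proof (Rmax_r (Rabs (fst z)) (Rabs (snd z))). lra. Qed.

Ltac Csplit := apply injective_projections; simpl.

Lemma Dz_affine (al be p : C) : Dz (fun z => al + be * z)%C p be.
Proof.
  intros eps Heps. exists 1. split; [lra|]. intros z _.
  replace (al + be * z - (al + be * p) - be * (z - p))%C with (RtoC 0) by ring.
  rewrite Cmod_0. pose proof (Cmod_ge_0 (z - p)). nra.
Qed.

Lemma RI_affine (al be : C) a b c d : a <= b -> c <= d ->
  RI (fun z => al + be * z)%C a b c d = RtoC 0.
Proof.
  intros Hab Hcd.
  assert (HB : BC (fun z => al + be * z)%C a b c d).
  { intros z _. eapply Dz_cont. apply Dz_affine. }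
  destruct (BC_ex _ a b c d Hab Hcd HB) as [A1 [A2 [A3 A4]]].
  unfold RI. rewrite <- !RInt_Cminus by auto.
  rewrite (RInt_ext (V:=C_R_CompleteNormedModule) _ (fun _ => Cmult be (0, c - d))).
  rewrite (RInt_ext (V:=C_R_CompleteNormedModule) (fun t => _ - _)%C (fun _ => Cmult be (b - a, 0))).
  rewrite !RInt_Cconst. destruct be as [u v]. unfold RtoC, Ci, Cmult, Cplus; Csplit; ring.
  all: intros; destruct be; unfold Cminus, Cmult, Cplus, Copp; Csplit; ring.
Qed.

Record rect := mkR { ra : R; rb : R; rc : R; rd : R }.
Definition RIr (g : C -> C) (r : rect) := RI g (ra r) (rb r) (rc r) (rd r).
Definition inR (r : rect) (z : C) := ra r <= fst z <= rb r /\ rc r <= snd z <= rd r.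
Definition wf (r : rect) := ra r <= rb r /\ rc r <= rd r.

Definition q1 r := mkR (ra r) ((ra r + rb r)/2) (rc r) ((rc r + rd r)/2).
Definition q2 r := mkR ((ra r + rb r)/2) (rb r) (rc r) ((rc r + rd r)/2).
Definition q3 r := mkR (ra r) ((ra r + rb r)/2) ((rc r + rd r)/2) (rd r).
Definition q4 r := mkR ((ra r + rb r)/2) (rb r) ((rc r + rd r)/2) (rd r).

Definition child (r r' : rect) : Prop :=
  ra r <= ra r' /\ rb r' <= rb r /\ rb r' - ra r' = (rb r - ra r) / 2 /\
  rc r <= rc r' /\ rd r' <= rd r /\ rd r' - rc r' = (rd r - rc r) / 2.

Lemma child_q r : wf r -> child r (q1 r) /\ child r (q2 r) /\ child r (q3 r) /\ child r (q4 r).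
Proof. intros [H1 H2]; unfold child, q1, q2, q3, q4; simpl; repeat split; lra. Qed.

Definition nxt (g : C -> C) (r : rect) : rect :=
  if Rle_dec (Cmod (RIr g r) / 4) (Cmod (RIr g (q1 r))) then q1 r else
  if Rle_dec (Cmod (RIr g r) / 4) (Cmod (RIr g (q2 r))) then q2 r else
  if Rle_dec (Cmod (RIr g r) / 4) (Cmod (RIr g (q3 r))) then q3 r else q4 r.

Lemma child_nxt g r : wf r -> child r (nxt g r).
Proof.
  intros H. destruct (child_q r H) as [A [B [C' D]]].
  unfold nxt. repeat destruct Rle_dec; auto.
Qed.

Definition CRr (g : C -> C) (r : rect) := forall z, inR r z -> Cc g z.

Lemma CRr_BC g r : wf r -> CRr g r -> BC g (ra r) (rb r) (rc r) (rd r).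
Proof. intros W H z Hz. destruct W. apply H. unfold inR, onB in *. destruct Hz as [[? [->| ->]]|[? [->| ->]]]; lra. Qed.

Lemma CRr_sub g r r' : CRr g r -> (forall z, inR r' z -> inR r z) -> CRr g r'.
Proof. intros H S z Hz. apply H, S, Hz. Qed.

Lemma RIr_quarters g r : wf r -> CRr g r ->
  RIr g r = (RIr g (q1 r) + RIr g (q2 r) + RIr g (q3 r) + RIr g (q4 r))%C.
Proof.
  intros [H1 H2] HC. unfold RIr, q1, q2, q3, q4; simpl.
  set (ma := (ra r + rb r) / 2). set (mc := (rc r + rd r) / 2).
  assert (S : forall a' b' c' d', ra r <= a' -> b' <= rb r -> rc r <= c' -> d' <= rd r ->
     a' <= b' -> c' <= d' -> BC g a' b' c' d').
  { intros a' b' c' d' ? ? ? ? ? ? z Hz. apply HC. unfold onB, inR in *.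
    destruct Hz as [[? [->| ->]]|[? [->| ->]]]; lra. }
  rewrite (RI_split_y g (ra r) (rb r) (rc r) mc (rd r)) by (unfold mc; try apply S; lra).
  rewrite (RI_split_x g (ra r) ma (rb r) (rc r) mc) by (unfold ma, mc; try apply S; lra).
  rewrite (RI_split_x g (ra r) ma (rb r) mc (rd r)) by (unfold ma, mc; try apply S; lra).
  ring.
Qed.

Lemma nxt_big g r : wf r -> CRr g r -> Cmod (RIr g r) / 4 <= Cmod (RIr g (nxt g r)).
Proof.
  intros W HC. unfold nxt.
  destruct Rle_dec as [h1|h1]; auto.
  destruct Rle_dec as [h2|h2]; auto.
  destruct Rle_dec as [h3|h3]; auto.
  assert (Cmod (RIr g r) <= Cmod (RIr g (q1 r) + RIr g (q2 r) + RIr g (q3 r)) + Cmod (RIr g (q4 r))).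
  { rewrite (RIr_quarters g r W HC) at 1. apply Cmod_triangle. }
  pose proof (Cmod_triangle (RIr g (q1 r) + RIr g (q2 r)) (RIr g (q3 r))).
  pose proof (Cmod_triangle (RIr g (q1 r)) (RIr g (q2 r))).
  lra.
Qed.

Fixpoint sq (g : C -> C) (r0 : rect) (n : nat) : rect :=
  match n with O => r0 | S k => nxt g (sq g r0 k) end.

Lemma sq_props g r0 n : wf r0 -> CRr g r0 ->
  ra r0 <= ra (sq g r0 n) /\ rb (sq g r0 n) <= rb r0 /\
  rc r0 <= rc (sq g r0 n) /\ rd (sq g r0 n) <= rd r0 /\
  rb (sq g r0 n) - ra (sq g r0 n) = (rb r0 - ra r0) / 2 ^ n /\
  rd (sq g r0 n) - rc (sq g r0 n) = (rd r0 - rc r0) / 2 ^ n /\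
  Cmod (RIr g r0) / 4 ^ n <= Cmod (RIr g (sq g r0 n)).
Proof.
  intros W HC. induction n as [|n IH]; simpl.
  - destruct W. repeat split; try lra; field_simplify; lra.
  - destruct IH as [I1 [I2 [I3 [I4 [I5 [I6 I7]]]]]].
    assert (Wn : wf (sq g r0 n)).
    { destruct W. split.
      - assert (0 <= (rb r0 - ra r0) / 2 ^ n) by (apply Rdiv_le_0_compat; [lra| apply pow_lt; lra]). lra.
      - assert (0 <= (rd r0 - rc r0) / 2 ^ n) by (apply Rdiv_le_0_compat; [lra| apply pow_lt; lra]). lra. }
    assert (Cn : CRr g (sq g r0 n)).
    { eapply CRr_sub. exact HC. unfold inR; intros z Hz; lra. }
    destruct (child_nxt g _ Wn) as [C1 [C2 [C3 [C4 [C5 C6]]]]].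
    pose proof (nxt_big g _ Wn Cn).
    assert (P2 : 0 < 2 ^ n) by (apply pow_lt; lra).
    assert (P4 : 0 < 4 ^ n) by (apply pow_lt; lra).
    repeat split; try lra.
    + rewrite C3, I5. field. lra.
    + rewrite C6, I6. field. lra.
    + replace (Cmod (RIr g r0) / (4 * 4 ^ n)) with ((Cmod (RIr g r0) / 4 ^ n) / 4) by (field; lra). lra.
Qed.

Lemma sq_mono g r0 n k : wf r0 -> CRr g r0 ->
  ra (sq g r0 n) <= ra (sq g r0 (n + k)) /\ rb (sq g r0 (n + k)) <= rb (sq g r0 n) /\
  rc (sq g r0 n) <= rc (sq g r0 (n + k)) /\ rd (sq g r0 (n + k)) <= rd (sq g r0 n).
Proof.
  intros W HC. induction k as [|k IH].
  - rewrite Nat.add_0_r. lra.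
  - rewrite Nat.add_succ_r. simpl.
    destruct (sq_props g r0 (n + k) W HC) as [I1 [I2 [I3 [I4 [I5 [I6 I7]]]]]].
    assert (Wn : wf (sq g r0 (n + k))).
    { destruct W. split.
      - assert (0 <= (rb r0 - ra r0) / 2 ^ (n + k)) by (apply Rdiv_le_0_compat; [lra| apply pow_lt; lra]). lra.
      - assert (0 <= (rd r0 - rc r0) / 2 ^ (n + k)) by (apply Rdiv_le_0_compat; [lra| apply pow_lt; lra]). lra. }
    destruct (child_nxt g _ Wn) as [C1 [C2 [C3 [C4 [C5 C6]]]]]. lra.
Qed.

Lemma exists_nat_gt (x : R) : exists n : nat, x < INR n.
Proof.
  destruct (archimed x) as [H _]. exists (Z.to_nat (up x)).
  destruct (Z.le_gt_cases 0 (up x)) as [h|h].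
  - rewrite INR_IZR_INZ, Z2Nat.id; auto.
  - pose proof (pos_INR (Z.to_nat (up x))). apply IZR_lt in h. lra.
Qed.

Lemma pow2_ge (n : nat) : INR n + 1 <= 2 ^ n.
Proof.
  induction n as [|n IH]; [simpl; lra|]. rewrite S_INR. simpl.
  assert (1 <= 2 ^ n) by (pose proof (pos_INR n); lra). lra.
Qed.

Lemma Cc_minus (f g : C -> C) p : Cc f p -> Cc g p -> Cc (fun z => f z - g z)%C p.
Proof.
  intros Hf Hg eps Heps.
  destruct (Hf (eps/2) ltac:(lra)) as [d1 [Hd1 H1]].
  destruct (Hg (eps/2) ltac:(lra)) as [d2 [Hd2 H2]].
  exists (Rmin d1 d2). split; [apply Rmin_pos; auto|]. intros z Hz.
  pose proof (Rmin_l d1 d2); pose proof (Rmin_r d1 d2).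
  specialize (H1 z ltac:(lra)). specialize (H2 z ltac:(lra)).
  replace (f z - g z - (f p - g p))%C with ((f z - f p) - (g z - g p))%C by ring.
  eapply Rle_lt_trans. apply Cmod_triangle. rewrite Cmod_opp. lra.
Qed.

Lemma Cc_plus (f g : C -> C) p : Cc f p -> Cc g p -> Cc (fun z => f z + g z)%C p.
Proof.
  intros Hf Hg eps Heps.
  destruct (Hf (eps/2) ltac:(lra)) as [d1 [Hd1 H1]].
  destruct (Hg (eps/2) ltac:(lra)) as [d2 [Hd2 H2]].
  exists (Rmin d1 d2). split; [apply Rmin_pos; auto|]. intros z Hz.
  pose proof (Rmin_l d1 d2); pose proof (Rmin_r d1 d2).
  specialize (H1 z ltac:(lra)). specialize (H2 z ltac:(lra)).
  replace (f z + g z - (f p + g p))%C with ((f z - f p) + (g z - g p))%C by ring.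
  eapply Rle_lt_trans. apply Cmod_triangle. lra.
Qed.

Theorem goursat (g : C -> C) a b c d : a <= b -> c <= d ->
  (forall z, a <= fst z <= b -> c <= snd z <= d -> exists l, Dz g z l) ->
  RI g a b c d = RtoC 0.
Proof.
  intros Hab Hcd HD.
  set (r0 := mkR a b c d).
  assert (W : wf r0) by (split; simpl; auto).
  assert (HC : CRr g r0).
  { intros z [Hx Hy]. destruct (HD z Hx Hy) as [l Hl]. eapply Dz_cont; eauto. }
  destruct (Req_dec (Cmod (RI g a b c d)) 0) as [E|E].
  { apply Cmod_eq_0 in E. exact E. }
  exfalso. set (A := Cmod (RI g a b c d)).
  assert (HA : 0 < A) by (pose proof (Cmod_ge_0 (RI g a b c d)); unfold A; lra).
  pose proof (sq_props g r0) as SP. pose proof (sq_mono g r0) as SM.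
  assert (Wn : forall n, ra (sq g r0 n) <= rb (sq g r0 n) /\ rc (sq g r0 n) <= rd (sq g r0 n)).
  { intros n. destruct (SP n W HC) as [I1 [I2 [I3 [I4 [I5 [I6 I7]]]]]]. simpl in *. split.
    - assert (0 <= (b - a) / 2 ^ n) by (apply Rdiv_le_0_compat; [lra| apply pow_lt; lra]). lra.
    - assert (0 <= (d - c) / 2 ^ n) by (apply Rdiv_le_0_compat; [lra| apply pow_lt; lra]). lra. }
  destruct (completeness (fun x => exists n, x = ra (sq g r0 n))) as [px Hpx].
  { exists b. intros x [n ->]. destruct (SP n W HC) as [I1 [I2 _]]. destruct (Wn n). simpl in *. lra. }
  { exists a. exists O. reflexivity. }
  destruct (completeness (fun x => exists n, x = rc (sq g r0 n))) as [py Hpy].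
  { exists d. intros x [n ->]. destruct (SP n W HC) as [I1 [I2 [I3 [I4 _]]]]. destruct (Wn n). simpl in *. lra. }
  { exists c. exists O. reflexivity. }
  assert (Px : forall n, ra (sq g r0 n) <= px <= rb (sq g r0 n)).
  { intros n. split.
    - apply (proj1 Hpx). exists n; auto.
    - apply (proj2 Hpx). intros x [k ->].
      destruct (SM k n W HC) as [M1 _]. destruct (SM n k W HC) as [_ [M2 _]].
      destruct (Wn (k + n)%nat). rewrite Nat.add_comm in M2. lra. }
  assert (Py : forall n, rc (sq g r0 n) <= py <= rd (sq g r0 n)).
  { intros n. split.
    - apply (proj1 Hpy). exists n; auto.
    - apply (proj2 Hpy). intros x [k ->].
      destruct (SM k n W HC) as [_ [_ [M1 _]]]. destruct (SM n k W HC) as [_ [_ [_ M2]]].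
      destruct (Wn (k + n)%nat). rewrite Nat.add_comm in M2. lra. }
  set (p := (px, py) : C).
  destruct (Px O) as [Px1 Px2]; destruct (Py O) as [Py1 Py2]. simpl in Px1, Px2, Py1, Py2.
  destruct (HD p ltac:(simpl; lra) ltac:(simpl; lra)) as [l Hl].
  set (s := (b - a) + (d - c)).
  assert (Hs : 0 <= s) by (unfold s; lra).
  set (eps := A / (2 * (s * s + 1))).
  assert (Heps : 0 < eps) by (unfold eps; apply Rdiv_lt_0_compat; nra).
  destruct (Hl eps Heps) as [delta [Hdelta HZ]].
  destruct (exists_nat_gt (s / delta)) as [n Hn].
  pose proof (pow2_ge n) as P2.
  assert (P2p : 0 < 2 ^ n) by (apply pow_lt; lra).
  set (sn := s / 2 ^ n).
  assert (Hsn : sn < delta).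
  { assert (s < INR n * delta).
    { apply Rmult_lt_compat_r with (r := delta) in Hn; auto.
      unfold Rdiv in Hn. rewrite Rmult_assoc, Rinv_l, Rmult_1_r in Hn by lra. exact Hn. }
    unfold sn. apply (Rmult_lt_reg_r (2 ^ n)); auto. unfold Rdiv.
    rewrite Rmult_assoc, Rinv_l, Rmult_1_r by lra. nra. }
  destruct (SP n W HC) as [I1 [I2 [I3 [I4 [I5 [I6 I7]]]]]]. simpl in I1, I2, I3, I4, I5, I6.
  destruct (Px n) as [Pxn1 Pxn2]; destruct (Py n) as [Pyn1 Pyn2]; destruct (Wn n) as [Wn1 Wn2].
  set (rn := sq g r0 n) in *.
  assert (Hsum : (rb rn - ra rn) + (rd rn - rc rn) = sn).
  { rewrite I5, I6. unfold sn, s. field. lra. }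
  assert (Hnear : forall z, inR rn z -> Cmod (z - p) <= sn).
  { intros z [Hx Hy]. eapply Rle_trans. apply Cmod_le_sum.
    destruct z as [zx zy]. unfold p. simpl fst in *; simpl snd in *. unfold Cminus, Cplus, Copp; simpl.
    unfold Rabs; repeat destruct Rcase_abs; lra. }
  set (al := (g p - l * p)%C).
  set (aff := fun z => (al + l * z)%C).
  set (h := fun z => (g z - aff z)%C).
  assert (HCn : CRr g rn) by (eapply CRr_sub; [exact HC| intros z Hz; unfold inR in *; simpl; lra]).
  assert (BCg : BC g (ra rn) (rb rn) (rc rn) (rd rn)) by (apply CRr_BC; [split; auto| auto]).
  assert (BCa : BC aff (ra rn) (rb rn) (rc rn) (rd rn)).
  { intros z _. eapply Dz_cont. apply Dz_affine. }
  assert (Eh : RI h (ra rn) (rb rn) (rc rn) (rd rn) = RIr g rn).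
  { unfold h. rewrite RI_minus by auto. unfold aff. rewrite RI_affine by auto.
    unfold RIr. ring. }
  assert (Bh : Cmod (RI h (ra rn) (rb rn) (rc rn) (rd rn)) <= 2 * (eps * sn) * sn).
  { rewrite <- Hsum at 2. apply RI_bound; auto.
    - intros z Hz. apply Cc_minus; auto.
    - intros z Hz. unfold h, aff, al.
      replace (g z - (g p - l * p + l * z))%C with (g z - g p - l * (z - p))%C by ring.
      assert (Hz' : inR rn z) by (unfold inR, onB in *; destruct Hz as [[? [->| ->]]|[? [->| ->]]]; lra).
      pose proof (Hnear z Hz').
      eapply Rle_trans. apply HZ. lra. apply Rmult_le_compat_l; lra. }
  rewrite Eh in Bh.
  assert (E4 : 4 ^ n = 2 ^ n * 2 ^ n).
  { replace 4 with (2 * 2) by lra. apply Rpow_mult_distr. }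
  assert (Hfin : A <= 2 * eps * s * s).
  { assert (A / 4 ^ n <= 2 * eps * s * s / 4 ^ n).
    { eapply Rle_trans. exact I7. eapply Rle_trans. exact Bh. unfold sn. rewrite E4. right. field. lra. }
    apply Rmult_le_reg_r with (r := / 4 ^ n). apply Rinv_0_lt_compat, pow_lt; lra.
    unfold Rdiv in H. lra. }
  unfold eps in Hfin.
  assert (2 * (A / (2 * (s * s + 1))) * s * s = A * (s * s) / (s * s + 1)) by (field; nra).
  rewrite H in Hfin.
  assert (A * (s * s) / (s * s + 1) < A).
  { apply (Rmult_lt_reg_r (s * s + 1)). nra. unfold Rdiv. rewrite Rmult_assoc, Rinv_l by nra. nra. }
  lra.
Qed.

Definition inner (a' b' c' d' : R) (z : C) := a' < fst z < b' /\ c' < snd z < d'.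

Theorem deform (g : C -> C) a b c d a' b' c' d' :
  a <= a' -> a' <= b' -> b' <= b -> c <= c' -> c' <= d' -> d' <= d ->
  (forall z, a <= fst z <= b -> c <= snd z <= d -> ~ inner a' b' c' d' z -> exists l, Dz g z l) ->
  RI g a b c d = RI g a' b' c' d'.
Proof.
  intros h1 h2 h3 h4 h5 h6 HD.
  assert (HC : forall z, a <= fst z <= b -> c <= snd z <= d -> ~ inner a' b' c' d' z -> Cc g z).
  { intros z X Y N. destruct (HD z X Y N) as [l Hl]. eapply Dz_cont; eauto. }
  Ltac bcs HC := intros z Hz; apply HC; unfold onB, inner in *;
    destruct Hz as [[? [Hy| Hy]]|[? [Hx| Hx]]]; try rewrite Hy; try rewrite Hx; try lra;
    intros [[? ?] [? ?]]; lra.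
  rewrite (RI_split_x g a a' b c d) by (try lra; bcs HC).
  rewrite (RI_split_x g a' b' b c d) by (try lra; bcs HC).
  rewrite (RI_split_y g a' b' c c' d) by (try lra; bcs HC).
  rewrite (RI_split_y g a' b' c' d' d) by (try lra; bcs HC).
  rewrite (goursat g a a' c d) by (try lra; intros z X Y; apply HD; try lra; unfold inner; intros [[? ?] [? ?]]; lra).
  rewrite (goursat g b' b c d) by (try lra; intros z X Y; apply HD; try lra; unfold inner; intros [[? ?] [? ?]]; lra).
  rewrite (goursat g a' b' c c') by (try lra; intros z X Y; apply HD; try lra; unfold inner; intros [[? ?] [? ?]]; lra).
  rewrite (goursat g a' b' d' d) by (try lra; intros z X Y; apply HD; try lra; unfold inner; intros [[? ?] [? ?]]; lra).
  ring.
Qed.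

Lemma Dz_const (k p : C) : Dz (fun _ => k) p (RtoC 0).
Proof.
  intros eps Heps. exists 1. split; [lra|]. intros z _.
  replace (k - k - RtoC 0 * (z - p))%C with (RtoC 0) by ring.
  rewrite Cmod_0. pose proof (Cmod_ge_0 (z - p)). nra.
Qed.

Lemma Dz_id (p : C) : Dz (fun z => z) p (RtoC 1).
Proof.
  intros eps Heps. exists 1. split; [lra|]. intros z _.
  replace (z - p - RtoC 1 * (z - p))%C with (RtoC 0) by ring.
  rewrite Cmod_0. pose proof (Cmod_ge_0 (z - p)). nra.
Qed.

Lemma Dz_plus (u v : C -> C) p lu lv : Dz u p lu -> Dz v p lv ->
  Dz (fun z => u z + v z)%C p (lu + lv)%C.
Proof.
  intros Hu Hv eps Heps.
  destruct (Hu (eps/2) ltac:(lra)) as [d1 [Hd1 H1]].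
  destruct (Hv (eps/2) ltac:(lra)) as [d2 [Hd2 H2]].
  exists (Rmin d1 d2). split; [apply Rmin_pos; auto|]. intros z Hz.
  pose proof (Rmin_l d1 d2); pose proof (Rmin_r d1 d2).
  specialize (H1 z ltac:(lra)). specialize (H2 z ltac:(lra)).
  replace (u z + v z - (u p + v p) - (lu + lv) * (z - p))%C with
    ((u z - u p - lu * (z - p)) + (v z - v p - lv * (z - p)))%C by ring.
  eapply Rle_trans. apply Cmod_triangle. lra.
Qed.

Lemma Dz_opp (u : C -> C) p lu : Dz u p lu -> Dz (fun z => - u z)%C p (- lu)%C.
Proof.
  intros Hu eps Heps. destruct (Hu eps Heps) as [d [Hd H]]. exists d; split; auto.
  intros z Hz. replace (- u z - - u p - - lu * (z - p))%C with (- (u z - u p - lu * (z - p)))%C by ring.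
  rewrite Cmod_opp. auto.
Qed.

Lemma Dz_minus (u v : C -> C) p lu lv : Dz u p lu -> Dz v p lv ->
  Dz (fun z => u z - v z)%C p (lu - lv)%C.
Proof. intros Hu Hv. apply (Dz_plus u (fun z => - v z)%C p lu (- lv)%C Hu). apply Dz_opp, Hv. Qed.

Lemma Dz_ext (u v : C -> C) p l : (forall z, u z = v z) -> Dz u p l -> Dz v p l.
Proof. intros E H eps Heps. destruct (H eps Heps) as [d [Hd H']]. exists d; split; auto.
  intros z Hz. rewrite <- !E. auto. Qed.

Lemma frac_le (x y : R) : 0 <= x -> 0 <= y -> x / (y + 1) * y <= x.
Proof.
  intros Hx Hy. unfold Rdiv. rewrite Rmult_assoc.
  assert (/ (y + 1) * y <= 1).
  { apply (Rmult_le_reg_l (y + 1)); [lra|]. rewrite <- Rmult_assoc, Rinv_r by lra. lra. }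
  assert (0 <= / (y + 1) * y) by (apply Rmult_le_pos; [apply Rlt_le, Rinv_0_lt_compat; lra| lra]).
  nra.
Qed.

Lemma Dz_bound (u : C -> C) p lu : Dz u p lu -> exists d, 0 < d /\
  forall z, Cmod (z - p) < d -> Cmod (u z - u p) <= (Cmod lu + 1) * Cmod (z - p).
Proof.
  intros H. destruct (H 1 Rlt_0_1) as [d [Hd Hz]]. exists d; split; auto.
  intros z Hzp. specialize (Hz z Hzp).
  replace (u z - u p)%C with ((u z - u p - lu * (z - p)) + lu * (z - p))%C by ring.
  eapply Rle_trans. apply Cmod_triangle. rewrite Cmod_mult. lra.
Qed.

Lemma Dz_mult (u v : C -> C) p lu lv : Dz u p lu -> Dz v p lv ->
  Dz (fun z => u z * v z)%C p (lu * v p + u p * lv)%C.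
Proof.
  intros Hu Hv eps Heps.
  set (U := Cmod (u p)). set (V := Cmod (v p)). set (Lu := Cmod lu).
  assert (HU : 0 <= U) by apply Cmod_ge_0.
  assert (HV : 0 <= V) by apply Cmod_ge_0.
  assert (HL : 0 <= Lu) by apply Cmod_ge_0.
  destruct (Hu (eps / 3 / (V + 1))) as [d1 [Hd1 H1]].
  { apply Rdiv_lt_0_compat; lra. }
  destruct (Hv (eps / 3 / (U + 1))) as [d2 [Hd2 H2]].
  { apply Rdiv_lt_0_compat; lra. }
  destruct (Dz_bound u p lu Hu) as [d3 [Hd3 H3]].
  destruct (Dz_cont v p lv Hv (eps / 3 / (Lu + 1))) as [d4 [Hd4 H4]].
  { apply Rdiv_lt_0_compat; lra. }
  exists (Rmin (Rmin d1 d2) (Rmin d3 d4)). split.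
  { repeat apply Rmin_pos; auto. }
  intros z Hz.
  pose proof (Rmin_l (Rmin d1 d2) (Rmin d3 d4)); pose proof (Rmin_r (Rmin d1 d2) (Rmin d3 d4)).
  pose proof (Rmin_l d1 d2); pose proof (Rmin_r d1 d2); pose proof (Rmin_l d3 d4); pose proof (Rmin_r d3 d4).
  specialize (H1 z ltac:(lra)). specialize (H2 z ltac:(lra)). specialize (H3 z ltac:(lra)). specialize (H4 z ltac:(lra)).
  replace (u z * v z - u p * v p - (lu * v p + u p * lv) * (z - p))%C with
    ((u z - u p - lu * (z - p)) * v p + u p * (v z - v p - lv * (z - p)) + (u z - u p) * (v z - v p))%C by ring.
  set (m := Cmod (z - p)) in *. assert (Hm : 0 <= m) by apply Cmod_ge_0.
  eapply Rle_trans. apply Cmod_triangle. rewrite Cmod_mult.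
  eapply Rle_trans. apply Rplus_le_compat_r. apply Cmod_triangle. rewrite !Cmod_mult. fold U V.
  assert (T1 : Cmod (u z - u p - lu * (z - p)) * V <= eps / 3 * m).
  { eapply Rle_trans. apply Rmult_le_compat_r. exact HV. exact H1.
    replace (eps / 3 / (V + 1) * m * V) with (eps / 3 / (V + 1) * V * m) by ring.
    apply Rmult_le_compat_r; auto. apply frac_le; lra. }
  assert (T2 : U * Cmod (v z - v p - lv * (z - p)) <= eps / 3 * m).
  { eapply Rle_trans. apply Rmult_le_compat_l. exact HU. exact H2.
    replace (U * (eps / 3 / (U + 1) * m)) with (eps / 3 / (U + 1) * U * m) by ring.
    apply Rmult_le_compat_r; auto. apply frac_le; lra. }
  assert (T3 : Cmod (u z - u p) * Cmod (v z - v p) <= eps / 3 * m).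
  { pose proof (Cmod_ge_0 (v z - v p)). pose proof (Cmod_ge_0 (u z - u p)).
    eapply Rle_trans. apply Rmult_le_compat_r. auto. exact H3.
    fold Lu m. apply Rlt_le in H4.
    apply Rle_trans with ((Lu + 1) * m * (eps / 3 / (Lu + 1))).
    { apply Rmult_le_compat_l; auto. apply Rmult_le_pos; lra. }
    right. field. lra. }
  lra.
Qed.

Lemma Dz_inv (w p : C) : p <> w ->
  Dz (fun z => / (z - w))%C p (- / ((p - w) * (p - w)))%C.
Proof.
  intros Hpw eps Heps.
  assert (HD : (p - w)%C <> RtoC 0) by (intros E; apply Hpw; replace p with ((p - w) + w)%C by ring; rewrite E; ring).
  set (m := Cmod (p - w)).
  assert (Hm : 0 < m) by (apply Cmod_gt_0; auto).
  exists (Rmin (m / 2) (eps * (m * m * m) / 2)). split.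
  { apply Rmin_pos; [lra| apply Rdiv_lt_0_compat; [| lra]]. apply Rmult_lt_0_compat; [lra| apply Rmult_lt_0_compat; [nra|lra]]. }
  intros z Hz. pose proof (Rmin_l (m / 2) (eps * (m * m * m) / 2)). pose proof (Rmin_r (m / 2) (eps * (m * m * m) / 2)).
  set (h := (z - p)%C). set (hm := Cmod h). assert (Hh : 0 <= hm) by apply Cmod_ge_0.
  assert (Hzw : m / 2 <= Cmod (z - w)).
  { pose proof (Cmod_triangle (p - z) (z - w)) as T.
    replace ((p - z) + (z - w))%C with (p - w)%C in T by ring.
    rewrite (Cmod_sub_sym p z) in T. fold m h hm in T. fold h hm in Hz. lra. }
  assert (HZ : (z - w)%C <> RtoC 0) by (intros E; rewrite E, Cmod_0 in Hzw; lra).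
  replace (/ (z - w) - / (p - w) - - / ((p - w) * (p - w)) * h)%C with
    (h * h / ((z - w) * ((p - w) * (p - w))))%C.
  2: { unfold h. field. split; auto. }
  rewrite Cmod_div, !Cmod_mult by (apply Cmult_neq_0; auto; apply Cmult_neq_0; auto).
  fold hm m.
  fold h hm in Hz. assert (hm <= eps * (m * m * m) / 2) by lra.
  apply (Rmult_le_reg_r (Cmod (z - w) * (m * m))).
  { apply Rmult_lt_0_compat; nra. }
  unfold Rdiv. rewrite Rmult_assoc, Rinv_l by (apply Rgt_not_eq; apply Rmult_lt_0_compat; nra).
  rewrite Rmult_1_r.
  assert (hm * hm <= hm * (eps * (m * m * m) / 2)) by (apply Rmult_le_compat_l; lra).
  assert (0 <= eps * hm * (m * m)) by (apply Rmult_le_pos; [nra| nra]).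
  assert (eps * hm * (m * m) * (m / 2) <= eps * hm * (m * m) * Cmod (z - w)) by (apply Rmult_le_compat_l; lra).
  nra.
Qed.

Lemma Cc_inv0 (p : C) : p <> RtoC 0 -> Cc (fun z => / z)%C p.
Proof.
  intros Hp. apply (Dz_cont _ _ (- / ((p - 0) * (p - 0)))%C).
  apply (Dz_ext (fun z => / (z - 0))%C). { intros z. f_equal. ring. }
  apply Dz_inv. exact Hp.
Qed.

Lemma CInt_pair (p q : R -> R) a b : ex_RInt p a b -> ex_RInt q a b ->
  CInt (fun t => (p t, q t)) a b = (RInt p a b, RInt q a b).
Proof.
  intros Hp Hq. apply (is_RInt_unique (V:=C_R_CompleteNormedModule)).
  apply (is_RInt_fct_extend_pair (U:=R_NormedModule) (V:=R_NormedModule)); simpl;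
  apply (RInt_correct (V:=R_CompleteNormedModule)); auto.
Qed.

Definition J0 : C := RI (fun z => / z)%C (-1) 1 (-1) 1.

Lemma q_ex : ex_RInt (fun t => 2 / (t ^ 2 + 1)) (-1) 1.
Proof.
  apply (ex_RInt_continuous (V:=R_CompleteNormedModule)). intros z _. apply (ex_derive_continuous (K:=R_AbsRing) (V:=R_NormedModule)). auto_derive. nra.
Qed.

Lemma q_ge : 2 <= RInt (fun t => 2 / (t ^ 2 + 1)) (-1) 1.
Proof.
  assert (E : RInt (fun _ => 1) (-1) 1 = 2).
  { rewrite RInt_const. unfold scal; simpl; unfold mult; simpl. ring. }
  rewrite <- E at 1. apply RInt_le; [lra| apply ex_RInt_const | apply q_ex |].
  intros x Hx. apply (Rmult_le_reg_r (x ^ 2 + 1)); [nra|].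
  unfold Rdiv. rewrite Rmult_assoc, Rinv_l by nra. nra.
Qed.

Lemma J0_val : J0 = (0, 2 * RInt (fun t => 2 / (t ^ 2 + 1)) (-1) 1).
Proof.
  assert (Hne : forall t s : R, s <> 0 -> ((t, s) : C) <> RtoC 0).
  { intros t s Hs E. injection E. intros. lra. }
  assert (Hne' : forall t s : R, t <> 0 -> ((t, s) : C) <> RtoC 0).
  { intros t s Hs E. injection E. intros. lra. }
  unfold J0, RI.
  rewrite <- (RInt_Cminus (fun t => / (t, -1))%C (fun t => / (t, 1))%C).
  2,3: apply ex_h; [lra| intros x _; apply Cc_inv0, Hne; lra].
  rewrite <- (RInt_Cminus (fun t => / (1, t))%C (fun t => / (-1, t))%C).
  2,3: apply ex_v; [lra| intros x _; apply Cc_inv0, Hne'; lra].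
  rewrite (RInt_ext (V:=C_R_CompleteNormedModule) (fun t => / (t, -1) - / (t, 1))%C (fun t => (0, 2 / (t ^ 2 + 1)))).
  2: { intros x _. unfold Cinv, Cminus, Cplus, Copp; simpl.
       assert (0 < x * (x * 1) + 1) by nra.
       replace (-1 * (-1 * 1)) with 1 by ring. replace (1 * (1 * 1)) with 1 by ring.
       Csplit; field; lra. }
  rewrite (RInt_ext (V:=C_R_CompleteNormedModule) (fun t => / (1, t) - / (-1, t))%C (fun t => (2 / (t ^ 2 + 1), 0))).
  2: { intros x _. unfold Cinv, Cminus, Cplus, Copp; simpl.
       assert (0 < x * (x * 1) + 1) by nra.
       replace (-1 * (-1 * 1)) with 1 by ring. replace (1 * (1 * 1)) with 1 by ring.
       assert (E1 : 1 + x * (x * 1) = x * (x * 1) + 1) by ring. rewrite E1.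
       Csplit; field; lra. }
  rewrite !CInt_pair; [| apply q_ex | apply ex_RInt_const | apply ex_RInt_const | apply q_ex].
  rewrite RInt_const. unfold scal; simpl; unfold mult; simpl.
  unfold Ci, Cmult, Cplus; Csplit; ring.
Qed.

Lemma J0_bound : 4 <= Cmod J0.
Proof.
  eapply Rle_trans; [| apply Cmod_ge_snd]. rewrite J0_val. cbn [snd].
  pose proof q_ge. rewrite Rabs_right; lra.
Qed.

Lemma scale_int (f h : R -> C) s v : 0 < s -> exC f (v - s) (v + s) ->
  (forall y, -1 <= y <= 1 -> Cmult (RtoC s) (f (s * y + v)) = h y) ->
  CInt f (v - s) (v + s) = CInt h (-1) 1.
Proof.
  intros Hs Hex Hp.
  rewrite (RInt_ext (V:=C_R_CompleteNormedModule) h (fun y => scal s (f (s * y + v)))).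
  2: { intros x Hx. rewrite Rmin_left, Rmax_right in Hx by lra. rewrite scal_C. symmetry. apply Hp. lra. }
  transitivity (CInt f (s * -1 + v) (s * 1 + v)).
  - f_equal; ring.
  - symmetry. apply (RInt_comp_lin (V:=C_R_CompleteNormedModule) f s v (-1) 1).
    replace (s * -1 + v) with (v - s) by ring. replace (s * 1 + v) with (v + s) by ring. exact Hex.
Qed.

Lemma Cc_kw (w p : C) : p <> w -> Cc (fun z => / (z - w))%C p.
Proof. intros H. eapply Dz_cont. apply Dz_inv. exact H. Qed.

Lemma ne_of_fst (p w : C) : fst p <> fst w -> p <> w.
Proof. intros H E. apply H. rewrite E. reflexivity. Qed.
Lemma ne_of_snd (p w : C) : snd p <> snd w -> p <> w.
Proof. intros H E. apply H. rewrite E. reflexivity. Qed.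

Lemma RC_ne0 (s : R) : s <> 0 -> RtoC s <> RtoC 0.
Proof. intros H E. injection E. auto. Qed.

Lemma pw_aux (s : R) (u q : C) : s <> 0 -> q <> RtoC 0 -> u = (RtoC s * q)%C ->
  (RtoC s * / u)%C = (/ q)%C.
Proof. intros Hs Hq ->. field. split; auto. apply RC_ne0; auto. Qed.

Lemma J_scale (w : C) s : 0 < s ->
  RI (fun z => / (z - w))%C (fst w - s) (fst w + s) (snd w - s) (snd w + s) = J0.
Proof.
  intros Hs. destruct w as [wx wy]. simpl.
  assert (Hne : forall t s : R, s <> 0 -> ((t, s) : C) <> RtoC 0).
  { intros t s' Hs' E. injection E. intros. lra. }
  assert (Hne' : forall t s : R, t <> 0 -> ((t, s) : C) <> RtoC 0).
  { intros t s' Hs' E. injection E. intros. lra. }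
  assert (Hsn : RtoC s <> RtoC 0) by (apply RC_ne0; lra).
  unfold RI, J0.
  rewrite (scale_int (fun t => / ((t, (wy - s)%R) - (wx, wy)))%C (fun y => / (y, (-1)%R))%C s wx Hs).
  rewrite (scale_int (fun t => / ((t, (wy + s)%R) - (wx, wy)))%C (fun y => / (y, 1%R))%C s wx Hs).
  rewrite (scale_int (fun t => / (((wx + s)%R, t) - (wx, wy)))%C (fun y => / (1%R, y))%C s wy Hs).
  rewrite (scale_int (fun t => / (((wx - s)%R, t) - (wx, wy)))%C (fun y => / ((-1)%R, y))%C s wy Hs).
  1: unfold RI; reflexivity.
  all: try (intros y _; apply pw_aux; [lra| first [apply Hne; lra | apply Hne'; lra] |
             unfold RtoC, Cminus, Cplus, Copp, Cmult; Csplit; ring]).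
  all: match goal with
    | |- exC (fun t => (/ ((?x, t) - ?w))%C) ?c ?d =>
        apply (ex_v (fun z => / (z - w))%C c d x); [lra|]; intros y _; apply Cc_kw, ne_of_fst; simpl; lra
    | |- exC (fun t => (/ ((t, ?y) - ?w))%C) ?a ?b =>
        apply (ex_h (fun z => / (z - w))%C a b y); [lra|]; intros y' _; apply Cc_kw, ne_of_snd; simpl; lra
    end.
Qed.

Lemma onB_ne a b c d (w z : C) : a < fst w < b -> c < snd w < d -> onB a b c d z -> z <> w.
Proof.
  intros H1 H2 Hz E. subst z. unfold onB in Hz. destruct Hz as [[? [E|E]]|[? [E|E]]]; rewrite E in *; lra.
Qed.

Lemma Cmod_small (x : C) : (forall eta, 0 < eta -> Cmod x <= eta) -> x = RtoC 0.
Proof.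
  intros H. apply Cmod_eq_0. pose proof (Cmod_ge_0 x).
  destruct (Req_dec (Cmod x) 0) as [E|E]; auto.
  specialize (H (Cmod x / 2) ltac:(lra)). lra.
Qed.

Lemma sub_ne0 (z w : C) : z <> w -> (z - w)%C <> RtoC 0.
Proof. intros H E. apply H. replace z with ((z - w) + w)%C by ring. rewrite E. ring. Qed.

Theorem CIF (f : C -> C) a b c d (w : C) :
  a < fst w < b -> c < snd w < d ->
  (forall z, a <= fst z <= b -> c <= snd z <= d -> exists l, Dz f z l) ->
  RI (fun z => f z / (z - w))%C a b c d = (f w * J0)%C.
Proof.
  intros Hw1 Hw2 HD.
  destruct w as [wx wy]. simpl in Hw1, Hw2.
  set (w := (wx, wy) : C).
  set (s0 := Rmin (Rmin (wx - a) (b - wx)) (Rmin (wy - c) (d - wy)) / 2).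
  assert (Hs0 : 0 < s0).
  { unfold s0. apply Rdiv_lt_0_compat; [|lra]. repeat apply Rmin_pos; lra. }
  assert (Hs0b : s0 <= (wx - a) / 2 /\ s0 <= (b - wx) / 2 /\ s0 <= (wy - c) / 2 /\ s0 <= (d - wy) / 2).
  { unfold s0. pose proof (Rmin_l (Rmin (wx - a) (b - wx)) (Rmin (wy - c) (d - wy))).
    pose proof (Rmin_r (Rmin (wx - a) (b - wx)) (Rmin (wy - c) (d - wy))).
    pose proof (Rmin_l (wx - a) (b - wx)). pose proof (Rmin_r (wx - a) (b - wx)).
    pose proof (Rmin_l (wy - c) (d - wy)). pose proof (Rmin_r (wy - c) (d - wy)). lra. }
  assert (Hin : forall z, ~ inner (wx - s0) (wx + s0) (wy - s0) (wy + s0) z -> z <> w).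
  { intros z N E. apply N. rewrite E. unfold inner, w; simpl. lra. }
  assert (S1 : RI (fun z => / (z - w))%C a b c d = J0).
  { rewrite (deform _ a b c d (wx - s0) (wx + s0) (wy - s0) (wy + s0)) by
      (try lra; intros z _ _ N; eexists; apply Dz_inv, Hin, N).
    apply (J_scale w s0 Hs0). }
  set (phi := fun z => ((f z - f w) * / (z - w))%C).
  assert (Dphi : forall z, a <= fst z <= b -> c <= snd z <= d -> z <> w -> exists l, Dz phi z l).
  { intros z X Y N. destruct (HD z X Y) as [l Hl]. eexists.
    apply (Dz_mult (fun z => f z - f w)%C (fun z => / (z - w))%C).
    - apply (Dz_minus f (fun _ => f w)). exact Hl. apply Dz_const.
    - apply Dz_inv. exact N. }
  assert (S2 : RI phi a b c d = RtoC 0).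
  { destruct (HD w ltac:(simpl; lra) ltac:(simpl; lra)) as [lw Hlw].
    destruct (Dz_bound f w lw Hlw) as [d1 [Hd1 Hb1]].
    apply Cmod_small. intros eta Heta.
    set (K := Cmod lw + 1). assert (HK : 0 < K) by (unfold K; pose proof (Cmod_ge_0 lw); lra).
    set (s := Rmin s0 (Rmin (d1 / 4) (eta / (8 * K)))).
    assert (Hs : 0 < s) by (unfold s; repeat apply Rmin_pos; try lra; apply Rdiv_lt_0_compat; lra).
    assert (Hs1 : s <= s0) by apply Rmin_l.
    assert (Hs2 : s <= d1 / 4) by (eapply Rle_trans; [apply Rmin_r| apply Rmin_l]).
    assert (Hs3 : s <= eta / (8 * K)) by (eapply Rle_trans; [apply Rmin_r| apply Rmin_r]).
    rewrite (deform _ a b c d (wx - s) (wx + s) (wy - s) (wy + s)).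
    2-7: lra.
    2: { intros z X Y N. apply Dphi; auto. intros E. apply N. rewrite E. unfold inner, w; simpl. lra. }
    eapply Rle_trans. apply RI_bound; try lra.
    - intros z Hz. destruct (Dphi z) as [l Hl].
      + unfold onB in Hz; lra.
      + unfold onB in Hz; lra.
      + apply (onB_ne (wx - s) (wx + s) (wy - s) (wy + s)); simpl; auto; lra.
      + eapply Dz_cont; eauto.
    - intros z Hz. instantiate (1 := K).
      assert (Nz : z <> w) by (apply (onB_ne (wx - s) (wx + s) (wy - s) (wy + s)); simpl; auto; lra).
      assert (Dzw : Cmod (z - w) <= 2 * s).
      { eapply Rle_trans. apply Cmod_le_sum. destruct z as [zx zy]. unfold w, Cminus, Cplus, Copp; simpl.
        unfold onB in Hz; simpl in Hz. unfold Rabs; repeat destruct Rcase_abs; lra. }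
      pose proof (Hb1 z ltac:(lra)) as Bz.
      unfold phi. rewrite Cmod_mult, Cmod_inv by (apply sub_ne0; auto).
      assert (Pz : 0 < Cmod (z - w)) by (apply Cmod_gt_0, sub_ne0; auto).
      apply (Rmult_le_reg_r (Cmod (z - w))); auto.
      rewrite Rmult_assoc, Rinv_l, Rmult_1_r by lra. fold K in Bz. lra.
    - assert (8 * K * s <= eta).
      { apply Rmult_le_compat_l with (r := 8 * K) in Hs3; [|lra].
        replace (8 * K * (eta / (8 * K))) with eta in Hs3 by (field; lra). lra. }
      lra. }
  assert (BCphi : BC phi a b c d).
  { intros z Hz. destruct (Dphi z) as [l Hl]; try (unfold onB in Hz; lra).
    apply (onB_ne a b c d); simpl; auto. eapply Dz_cont; eauto. }
  assert (BCk : BC (fun z => / (z - w))%C a b c d).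
  { intros z Hz. apply Cc_kw. apply (onB_ne a b c d); simpl; auto. }
  rewrite (RI_ext _ (fun z => phi z + f w * / (z - w))%C) by (try lra; intros z Hz;
    unfold phi; field; apply sub_ne0, (onB_ne a b c d); simpl; auto).
  rewrite RI_plus; try lra; auto.
  2: { intros z Hz. eapply Dz_cont. apply (Dz_mult (fun _ => f w) (fun z => / (z - w))%C).
       apply Dz_const. apply Dz_inv. apply (onB_ne a b c d); simpl; auto. }
  rewrite RI_scal by (try lra; auto).
  rewrite S1, S2. ring.
Qed.

Lemma Cc_mult (u v : C -> C) p : Cc u p -> Cc v p -> Cc (fun z => u z * v z)%C p.
Proof.
  intros Hu Hv eps Heps.
  set (U := Cmod (u p)). set (V := Cmod (v p)).
  assert (HU : 0 <= U) by apply Cmod_ge_0. assert (HV : 0 <= V) by apply Cmod_ge_0.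
  set (eta := Rmin 1 (eps / (U + V + 1))).
  assert (He : 0 < eta) by (unfold eta; apply Rmin_pos; [lra| apply Rdiv_lt_0_compat; lra]).
  assert (He1 : eta <= 1) by apply Rmin_l.
  assert (He2 : eta * (U + V + 1) <= eps).
  { assert (eta <= eps / (U + V + 1)) by apply Rmin_r.
    apply Rmult_le_compat_r with (r := U + V + 1) in H; [|lra].
    replace (eps / (U + V + 1) * (U + V + 1)) with eps in H by (field; lra). lra. }
  destruct (Hu eta He) as [d1 [Hd1 H1]]. destruct (Hv eta He) as [d2 [Hd2 H2]].
  exists (Rmin d1 d2). split; [apply Rmin_pos; auto|]. intros z Hz.
  pose proof (Rmin_l d1 d2); pose proof (Rmin_r d1 d2).
  specialize (H1 z ltac:(lra)). specialize (H2 z ltac:(lra)).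
  replace (u z * v z - u p * v p)%C with
    ((u z - u p) * (v z - v p) + (u z - u p) * v p + u p * (v z - v p))%C by ring.
  eapply Rle_lt_trans. apply Cmod_triangle. rewrite Cmod_mult.
  eapply Rle_lt_trans. apply Rplus_le_compat_r. apply Cmod_triangle. rewrite !Cmod_mult. fold U V.
  set (A' := Cmod (u z - u p)) in *. set (B' := Cmod (v z - v p)) in *.
  assert (0 <= A') by apply Cmod_ge_0. assert (0 <= B') by apply Cmod_ge_0.
  assert (A' * B' <= eta * B') by (apply Rmult_le_compat_r; lra).
  assert (eta * B' <= eta) by nra.
  assert (A' * V <= eta * V) by (apply Rmult_le_compat_r; lra).
  assert (U * B' <= U * eta) by (apply Rmult_le_compat_l; lra).
  assert (A' * B' < eta) by nra.
  nra.
Qed.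

Definition Sq (g : C -> C) (c : C) (r : R) : C :=
  RI g (fst c - r) (fst c + r) (snd c - r) (snd c + r).
Definition onSq (c : C) (r : R) (z : C) := onB (fst c - r) (fst c + r) (snd c - r) (snd c + r) z.

Lemma onSq_far (c z : C) r : 0 < r -> onSq c r z -> r <= Cmod (z - c).
Proof.
  intros Hr Hz. destruct c as [cx cy], z as [zx zy]. unfold onSq, onB in Hz; simpl in Hz.
  destruct Hz as [[_ [E|E]]|[_ [E|E]]]; subst.
  - eapply Rle_trans; [|apply Cmod_ge_snd]. unfold Cminus, Cplus, Copp; simpl.
    rewrite Rabs_left by lra. lra.
  - eapply Rle_trans; [|apply Cmod_ge_snd]. unfold Cminus, Cplus, Copp; simpl.
    rewrite Rabs_right by lra. lra.
  - eapply Rle_trans; [|apply Cmod_ge_fst]. unfold Cminus, Cplus, Copp; simpl.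
    rewrite Rabs_left by lra. lra.
  - eapply Rle_trans; [|apply Cmod_ge_fst]. unfold Cminus, Cplus, Copp; simpl.
    rewrite Rabs_right by lra. lra.
Qed.

Lemma J0_ne : J0 <> RtoC 0.
Proof. intros E. pose proof J0_bound. rewrite E, Cmod_0 in H. lra. Qed.

Definition CIFp (g : C -> C) (c : C) (r : R) (w : C) : Prop :=
  Sq (fun z => g z * / (z - w))%C c r = (g w * J0)%C.

Theorem DQ_est (g : C -> C) (c : C) r M : 0 < r ->
  (forall z, onSq c r z -> Cc g z) ->
  (forall z, onSq c r z -> Cmod (g z) <= M) ->
  (forall w, Cmod (w - c) < r / 2 -> CIFp g c r w) ->
  forall w, 0 < Cmod (w - c) < r / 2 ->
  Cmod ((g w - g c) / (w - c) - Sq (fun z => g z * (/ (z - c) * / (z - c)))%C c r / J0)%C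
    <= 4 * M * Cmod (w - c) / (r * r).
Proof.
  intros Hr HC HM HCIF w Hw.
  assert (Hwc : (w - c)%C <> RtoC 0) by (intros E; rewrite E, Cmod_0 in Hw; lra).
  assert (Nw : forall z, onSq c r z -> (z - w)%C <> RtoC 0).
  { intros z Hz E. pose proof (onSq_far c z r Hr Hz).
    replace (z - c)%C with ((z - w) + (w - c))%C in H by ring. rewrite E in H.
    replace (RtoC 0 + (w - c))%C with (w - c)%C in H by ring. lra. }
  assert (Nc : forall z, onSq c r z -> (z - c)%C <> RtoC 0).
  { intros z Hz E. pose proof (onSq_far c z r Hr Hz). rewrite E, Cmod_0 in H. lra. }
  assert (Hw' := HCIF w ltac:(lra)). assert (Hc' := HCIF c ltac:(replace (c - c)%C with (RtoC 0) by ring; rewrite Cmod_0; lra)).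
  unfold CIFp, Sq in *.
  set (a := fst c - r) in *. set (b := fst c + r) in *. set (c' := snd c - r) in *. set (d := snd c + r) in *.
  assert (Hab : a <= b) by (unfold a, b; lra). assert (Hcd : c' <= d) by (unfold c', d; lra).
  assert (BCw : BC (fun z => g z * / (z - w))%C a b c' d).
  { intros z Hz. apply Cc_mult. apply HC, Hz. apply Cc_kw. intros E; apply (Nw z Hz). rewrite E. ring. }
  assert (BCc : BC (fun z => g z * / (z - c))%C a b c' d).
  { intros z Hz. apply Cc_mult. apply HC, Hz. apply Cc_kw. intros E; apply (Nc z Hz). rewrite E. ring. }
  assert (BCcc : BC (fun z => g z * (/ (z - c) * / (z - c)))%C a b c' d).
  { intros z Hz. apply Cc_mult. apply HC, Hz. apply Cc_mult; apply Cc_kw; intros E; apply (Nc z Hz); rewrite E; ring. }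
  set (g1 := fun z => (g z * / (z - w))%C) in *.
  set (g2 := fun z => (g z * / (z - c))%C) in *.
  set (g3 := fun z => (g z * (/ (z - c) * / (z - c)))%C) in *.
  set (g4 := fun z => (g z * ((w - c) * (/ (z - w) * (/ (z - c) * / (z - c)))))%C).
  assert (Ccst : forall (k p : C), Cc (fun _ => k) p).
  { intros k p eps He; exists 1; split; [lra|]; intros; replace (k - k)%C with (RtoC 0) by ring; rewrite Cmod_0; lra. }
  assert (BC4 : BC g4 a b c' d).
  { intros z Hz. unfold g4. apply Cc_mult. apply HC, Hz. apply Cc_mult. apply Ccst.
    apply Cc_mult. apply Cc_kw; intros E; apply (Nw z Hz); rewrite E; ring.
    apply Cc_mult; apply Cc_kw; intros E; apply (Nc z Hz); rewrite E; ring. }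
  set (E0 := RI g4 a b c' d).
  assert (Key : (RI g1 a b c' d - RI g2 a b c' d - (w - c) * RI g3 a b c' d)%C = ((w - c) * E0)%C).
  { rewrite <- (RI_scal g3 (w - c)) by auto.
    rewrite <- (RI_minus g1 g2) by auto.
    rewrite <- (RI_minus (fun z => g1 z - g2 z)%C (fun z => (w - c) * g3 z)%C) by
      (try lra; intros z Hz; first [apply Cc_minus; [apply BCw| apply BCc]; exact Hz | apply Cc_mult; [apply Ccst| apply BCcc; exact Hz]]).
    unfold E0. rewrite <- (RI_scal g4 (w - c)) by auto.
    apply RI_ext; auto. intros z Hz. pose proof (Nw z Hz). pose proof (Nc z Hz).
    unfold g1, g2, g3, g4. field. auto. }
  assert (BE : Cmod E0 <= 16 * M * Cmod (w - c) / (r * r)).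
  { unfold E0. eapply Rle_trans. apply (RI_bound g4 a b c' d (2 * M * Cmod (w - c) / (r * r * r))); auto.
    - intros z Hz. unfold g4. pose proof (Nw z Hz). pose proof (Nc z Hz).
      pose proof (onSq_far c z r Hr Hz) as F1.
      assert (F2 : r / 2 <= Cmod (z - w)).
      { pose proof (Cmod_triangle (z - w) (w - c)). replace (z - w + (w - c))%C with (z - c)%C in H1 by ring. lra. }
      rewrite !Cmod_mult, !Cmod_inv by auto.
      pose proof (Cmod_ge_0 (w - c)). pose proof (HM z Hz). pose proof (Cmod_ge_0 (g z)).
      assert (0 < Cmod (z - w)) by lra. assert (0 < Cmod (z - c)) by lra.
      assert (/ Cmod (z - w) <= 2 / r).
      { apply (Rmult_le_reg_r (Cmod (z - w))); auto. rewrite Rinv_l by lra.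
        apply (Rmult_le_reg_r (r / 2)); [lra|]. unfold Rdiv. field_simplify; nra. }
      assert (/ Cmod (z - c) <= / r).
      { apply Rinv_le_contravar; auto. }
      assert (0 <= / Cmod (z - w)) by (apply Rlt_le, Rinv_0_lt_compat; lra).
      assert (0 <= / Cmod (z - c)) by (apply Rlt_le, Rinv_0_lt_compat; lra).
      assert (X1 : / Cmod (z - c) * / Cmod (z - c) <= / r * / r) by (apply Rmult_le_compat; auto).
      assert (X2 : / Cmod (z - w) * (/ Cmod (z - c) * / Cmod (z - c)) <= 2 / r * (/ r * / r))
        by (apply Rmult_le_compat; auto; apply Rmult_le_pos; auto).
      assert (X3 : Cmod (w - c) * (/ Cmod (z - w) * (/ Cmod (z - c) * / Cmod (z - c))) <= Cmod (w - c) * (2 / r * (/ r * / r)))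
        by (apply Rmult_le_compat_l; auto).
      assert (X4 : 0 <= Cmod (w - c) * (/ Cmod (z - w) * (/ Cmod (z - c) * / Cmod (z - c)))) by
        (apply Rmult_le_pos; auto; apply Rmult_le_pos; auto; apply Rmult_le_pos; auto).
      eapply Rle_trans. apply Rmult_le_compat; [auto| auto | apply (HM z Hz) | exact X3].
      right. field. lra.
    - unfold a, b, c', d. right. field. lra. }
  assert (Fin : ((g w - g c) / (w - c) - RI g3 a b c' d / J0)%C = (E0 / J0)%C).
  { pose proof J0_ne. rewrite Hw', Hc' in Key.
    transitivity (((g w * J0 - g c * J0) - (w - c) * RI g3 a b c' d) / ((w - c) * J0))%C.
    { field. split; auto. }
    rewrite Key. field. split; auto. }
  rewrite Fin. pose proof J0_ne.
  rewrite Cmod_div by auto. pose proof J0_bound. pose proof (Cmod_ge_0 E0).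
  assert (Cmod E0 / Cmod J0 <= Cmod E0 / 4).
  { unfold Rdiv. apply Rmult_le_compat_l; auto. apply Rinv_le_contravar; lra. }
  assert (Cmod E0 / 4 <= 4 * M * Cmod (w - c) / (r * r)).
  { apply (Rmult_le_reg_r 4); [lra|]. replace (Cmod E0 / 4 * 4) with (Cmod E0) by field.
    replace (4 * M * Cmod (w - c) / (r * r) * 4) with (16 * M * Cmod (w - c) / (r * r)) by (field; lra). exact BE. }
  lra.
Qed.


Lemma CIFp_of_Dz (g : C -> C) (c : C) r : 0 < r ->
  (forall z, fst c - r <= fst z <= fst c + r -> snd c - r <= snd z <= snd c + r -> exists l, Dz g z l) ->
  forall w, Cmod (w - c) < r -> CIFp g c r w.
Proof.
  intros Hr HD w Hw. unfold CIFp, Sq.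
  pose proof (Cmod_ge_fst (w - c)) as F1. pose proof (Cmod_ge_snd (w - c)) as F2.
  assert (A1 : fst c - r < fst w < fst c + r).
  { destruct w, c. simpl in *. unfold Rabs in F1. destruct Rcase_abs in F1; lra. }
  assert (A2 : snd c - r < snd w < snd c + r).
  { destruct w, c. simpl in *. unfold Rabs in F2. destruct Rcase_abs in F2; lra. }

  exact (CIF g _ _ _ _ w A1 A2 HD).
Qed.

Lemma CIFp_limit (g : C -> C) (c : C) r w : 0 < r -> Cmod (w - c) < r / 2 ->
  (forall z, onSq c r z -> Cc g z) ->
  (forall eps, 0 < eps -> exists h, (forall z, onSq c r z -> Cc h z) /\ CIFp h c r w /\
      Cmod (h w - g w) <= eps /\ forall z, onSq c r z -> Cmod (h z - g z) <= eps) ->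
  CIFp g c r w.
Proof.
  intros Hr Hw HC HL. unfold CIFp.
  assert (Nw : forall z, onSq c r z -> (z - w)%C <> RtoC 0).
  { intros z Hz E. pose proof (onSq_far c z r Hr Hz).
    replace (z - c)%C with ((z - w) + (w - c))%C in H by ring. rewrite E in H.
    replace (RtoC 0 + (w - c))%C with (w - c)%C in H by ring. lra. }
  assert (Fw : forall z, onSq c r z -> r / 2 <= Cmod (z - w)).
  { intros z Hz. pose proof (onSq_far c z r Hr Hz).
    pose proof (Cmod_triangle (z - w) (w - c)). replace (z - w + (w - c))%C with (z - c)%C in H0 by ring. lra. }
  assert (Hab : fst c - r <= fst c + r) by lra. assert (Hcd : snd c - r <= snd c + r) by lra.
  assert (E : forall x y : C, (x - y)%C = RtoC 0 -> x = y).
  { intros x y Exy. replace x with ((x - y) + y)%C by ring. rewrite Exy. ring. }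
  apply E. apply Cmod_small. intros eta Heta.
  pose proof J0_bound as HJ.
  set (eps := eta / (16 + Cmod J0)).
  assert (He : 0 < eps) by (unfold eps; apply Rdiv_lt_0_compat; lra).
  destruct (HL eps He) as [h [Hh1 [Hh2 [Hh3 Hh4]]]].
  unfold CIFp, Sq in Hh2. unfold Sq.
  assert (BCg : BC (fun z => g z * / (z - w))%C (fst c - r) (fst c + r) (snd c - r) (snd c + r)).
  { intros z Hz. apply Cc_mult. apply HC, Hz. apply Cc_kw. intros Ez. apply (Nw z Hz). rewrite Ez. ring. }
  assert (BCh : BC (fun z => h z * / (z - w))%C (fst c - r) (fst c + r) (snd c - r) (snd c + r)).
  { intros z Hz. apply Cc_mult. apply Hh1, Hz. apply Cc_kw. intros Ez. apply (Nw z Hz). rewrite Ez. ring. }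
  replace (RI (fun z => g z * / (z - w))%C (fst c - r) (fst c + r) (snd c - r) (snd c + r) - g w * J0)%C
    with ((RI (fun z => g z * / (z - w))%C (fst c - r) (fst c + r) (snd c - r) (snd c + r)
         - RI (fun z => h z * / (z - w))%C (fst c - r) (fst c + r) (snd c - r) (snd c + r)) + (h w - g w) * J0)%C
    by (rewrite Hh2; ring).
  rewrite <- RI_minus by auto.
  eapply Rle_trans. apply Cmod_triangle. rewrite Cmod_mult.
  assert (B1 : Cmod (RI (fun z => g z * / (z - w) - h z * / (z - w))%C (fst c - r) (fst c + r) (snd c - r) (snd c + r))
     <= 2 * (eps * (2 / r)) * ((fst c + r - (fst c - r)) + (snd c + r - (snd c - r)))).
  { apply RI_bound; auto.
    - intros z Hz. apply Cc_minus; [apply BCg| apply BCh]; exact Hz.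
    - intros z Hz. replace (g z * / (z - w) - h z * / (z - w))%C with ((g z - h z) * / (z - w))%C by ring.
      rewrite Cmod_mult, Cmod_inv by (apply Nw; auto).
      pose proof (Fw z Hz). pose proof (Hh4 z Hz). rewrite Cmod_sub_sym in H0.
      assert (0 < Cmod (z - w)) by lra.
      assert (/ Cmod (z - w) <= 2 / r).
      { apply (Rmult_le_reg_r (Cmod (z - w))); auto. rewrite Rinv_l by lra.
        apply (Rmult_le_reg_r (r / 2)); [lra|]. unfold Rdiv. field_simplify; nra. }
      apply Rmult_le_compat; auto. apply Cmod_ge_0. apply Rlt_le, Rinv_0_lt_compat; lra. }
  replace (2 * (eps * (2 / r)) * ((fst c + r - (fst c - r)) + (snd c + r - (snd c - r)))) with (16 * eps) in B1 by (field; lra).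
  assert (eps * (16 + Cmod J0) = eta) by (unfold eps; field; lra).
  assert (Cmod (h w - g w) * Cmod J0 <= eps * Cmod J0) by (apply Rmult_le_compat_r; [apply Cmod_ge_0| auto]).
  lra.
Qed.

Lemma e1 (z w : C) : Defs.Csub z w = (z - w)%C. Proof. reflexivity. Qed.
Lemma e2 (z w : C) : Defs.Cdiv z w = (z / w)%C. Proof. reflexivity. Qed.
Lemma e3 (z : C) : Defs.Cabs z = Cmod z. Proof. reflexivity. Qed.

Lemma cover {X : Type} (ball : X -> R -> X -> Prop) (K : X -> Prop) :
  compact_in ball K ->
  (forall x y z rho, 0 < rho -> ball x (rho / 2) y -> ball y (rho / 2) z -> ball x rho z) ->
  (forall x rho, 0 < rho -> ball x rho x) ->
  forall (P : X -> R -> Prop), (forall x, K x -> exists r, 0 < r /\ P x r) ->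
  exists l : list (X * R), (forall q, In q l -> K (fst q) /\ 0 < snd q /\ P (fst q) (snd q)) /\
    forall z, K z -> exists q, In q l /\ ball (fst q) (snd q) z.
Proof.
  intros hK tri refl P HP.
  set (I := {q : X * R | K (fst q) /\ 0 < snd q /\ P (fst q) (snd q)}).
  set (U := fun (i : I) (z : X) => exists rho, 0 < rho /\ forall z', ball z rho z' -> ball (fst (proj1_sig i)) (snd (proj1_sig i)) z').
  destruct (hK I U) as [l Hl].
  - intros i x [rho [Hr Hx]]. exists (rho / 2). split; [lra|].
    intros y Hy. exists (rho / 2). split; [lra|]. intros z' Hz'. apply Hx. apply (tri x y z' rho Hr Hy Hz').
  - intros z Kz. destruct (HP z Kz) as [r [Hr Pr]].
    exists (exist _ (z, r) (conj Kz (conj Hr Pr))). exists r. split; auto.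
  - exists (map (@proj1_sig _ _) l). split.
    + intros q Hq. apply in_map_iff in Hq. destruct Hq as [i [<- _]]. exact (proj2_sig i).
    + intros z Kz. destruct (Hl z Kz) as [i [Hi [rho [Hr Hz]]]].
      exists (proj1_sig i). split. apply in_map; auto. apply Hz, refl, Hr.
Qed.

Lemma list_min {A : Type} (l : list (A * R)) : (forall q, In q l -> 0 < snd q) ->
  exists d, 0 < d /\ forall q, In q l -> d <= snd q.
Proof.
  induction l as [|q l IH]; intros H.
  - exists 1. split; [lra|]. intros q [].
  - destruct IH as [d [Hd Hq]]. { intros q' Hq'. apply H. right; auto. }
    exists (Rmin (snd q) d). split. apply Rmin_pos; auto. apply H; left; auto.
    intros q' [<-|Hq']. apply Rmin_l. eapply Rle_trans. apply Rmin_r. auto.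
Qed.

Lemma list_max {A : Type} (l : list A) (f : A -> R) : exists M, forall q, In q l -> f q <= M.
Proof.
  induction l as [|q l IH].
  - exists 0. intros q [].
  - destruct IH as [M HM]. exists (Rmax (f q) M). intros q' [<-|Hq'].
    apply Rmax_l. eapply Rle_trans. apply HM, Hq'. apply Rmax_r.
Qed.

Lemma list_max_ex {A : Type} (l : list A) (Q : A -> R -> Prop) :
  (forall q, In q l -> exists M, Q q M) -> exists M, forall q, In q l -> exists M', Q q M' /\ M' <= M.
Proof.
  induction l as [|q l IH]; intros H.
  - exists 0. intros q [].
  - destruct IH as [M HM]. { intros q' Hq'. apply H. right; auto. }
    destruct (H q (or_introl eq_refl)) as [Mq HMq].
    exists (Rmax Mq M). intros q' [<-|Hq'].
    + exists Mq. split; auto. apply Rmax_l.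
    + destruct (HM q' Hq') as [M' [H1 H2]]. exists M'. split; auto. eapply Rle_trans. exact H2. apply Rmax_r.
Qed.

Lemma Cmod_tri3 (x y z : C) : Cmod (z - x) <= Cmod (y - x) + Cmod (z - y).
Proof. replace (z - x)%C with ((y - x) + (z - y))%C by ring. apply Cmod_triangle. Qed.

Lemma ballC_iff c r z : ballC c r z = (Cmod (z - c) < r).
Proof. reflexivity. Qed.
Lemma ballV_iff {n : nat} (c : Vec n) r z : ballV c r z = (forall i, Cmod (z i - c i) < r).
Proof. reflexivity. Qed.

Lemma ballC_tri x y z rho : 0 < rho -> ballC x (rho / 2) y -> ballC y (rho / 2) z -> ballC x rho z.
Proof. rewrite !ballC_iff. intros _ H1 H2. pose proof (Cmod_tri3 x y z). lra. Qed.
Lemma ballC_refl x rho : 0 < rho -> ballC x rho x.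
Proof. rewrite ballC_iff. replace (x - x)%C with (RtoC 0) by ring. rewrite Cmod_0. lra. Qed.
Lemma ballV_tri {n : nat} (x y z : Vec n) rho : 0 < rho -> ballV x (rho / 2) y -> ballV y (rho / 2) z -> ballV x rho z.
Proof. rewrite !ballV_iff. intros Hr H1 H2 i. specialize (H1 i). specialize (H2 i).
  pose proof (Cmod_tri3 (x i) (y i) (z i)). lra. Qed.
Lemma ballV_refl {n : nat} (x : Vec n) rho : 0 < rho -> ballV x rho x.
Proof. rewrite ballV_iff. intros Hr i. replace (x i - x i)%C with (RtoC 0) by ring. rewrite Cmod_0. lra. Qed.

Lemma holo_iff (U : C -> Prop) (f : C -> C) : holo_on U f =
  (forall z0, U z0 -> exists l : C, forall eps, 0 < eps -> exists delta, 0 < delta /\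
    forall z, U z -> 0 < Cmod (z - z0) < delta -> Cmod ((f z - f z0) / (z - z0) - l) < eps).
Proof. reflexivity. Qed.

Lemma ballV_vcons {m : nat} (x x' : C) (y y' : Vec m) d :
  Cmod (x' - x) < d -> ballV y d y' -> ballV (vcons x y) d (vcons x' y').
Proof.
  rewrite !ballV_iff. intros H1 H2 i. pattern i. apply Fin.caseS'.
  - simpl. exact H1.
  - intros j. simpl. apply H2.
Qed.

Lemma ballV_vcons_inv {m : nat} (x x' : C) (y y' : Vec m) d :
  ballV (vcons x y) d (vcons x' y') -> Cmod (x' - x) < d /\ ballV y d y'.
Proof.
  rewrite !ballV_iff. intros H. split.
  - exact (H Fin.F1).
  - intros j. exact (H (Fin.FS j)).
Qed.

Lemma holo_id (U : C -> Prop) : holo_on U (fun z => z).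
Proof.
  rewrite holo_iff. intros z0 _. exists (RtoC 1). intros eps He. exists 1. split; [lra|].
  intros z _ [Hz _]. replace ((z - z0) / (z - z0) - RtoC 1)%C with (RtoC 0).
  rewrite Cmod_0; lra. field. intros E. rewrite E, Cmod_0 in Hz. lra.
Qed.

Lemma holo_const (U : C -> Prop) (k : C) : holo_on U (fun _ => k).
Proof.
  rewrite holo_iff. intros z0 _. exists (RtoC 0). intros eps He. exists 1. split; [lra|].
  intros z _ [Hz _]. replace ((k - k) / (z - z0) - RtoC 0)%C with (RtoC 0).
  rewrite Cmod_0; lra. field. intros E. rewrite E, Cmod_0 in Hz. lra.
Qed.

Lemma holo_Dz (c : C) r (f : C -> C) p : holo_on (ballC c r) f -> ballC c r p -> exists l, Dz f p l.
Proof.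
  rewrite holo_iff. intros H Hp. destruct (H p Hp) as [l Hl]. exists l.
  intros eps He. destruct (Hl eps He) as [d [Hd Hz]].
  rewrite ballC_iff in Hp.
  exists (Rmin d (r - Cmod (p - c))). split. { apply Rmin_pos; lra. }
  intros z Hzp. pose proof (Rmin_l d (r - Cmod (p - c))). pose proof (Rmin_r d (r - Cmod (p - c))).
  destruct (Req_dec (Cmod (z - p)) 0) as [E|E].
  - apply Cmod_eq_0 in E. assert (z = p) by (replace z with ((z - p) + p)%C by ring; rewrite E; ring).
    subst z. replace (f p - f p - l * (p - p))%C with (RtoC 0) by ring. rewrite Cmod_0, E, Cmod_0. lra.
  - assert (Hzp0 : 0 < Cmod (z - p)) by (pose proof (Cmod_ge_0 (z - p)); lra).
    assert (Uz : ballC c r z).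
    { rewrite ballC_iff. pose proof (Cmod_tri3 c p z). lra. }
    specialize (Hz z Uz ltac:(lra)).
    assert (Nz : (z - p)%C <> RtoC 0) by (intros E'; rewrite E', Cmod_0 in Hzp0; lra).
    replace (f z - f p - l * (z - p))%C with (((f z - f p) / (z - p) - l) * (z - p))%C by (field; auto).
    rewrite Cmod_mult. apply Rmult_le_compat_r; lra.
Qed.

Lemma vcons_inj1 {m : nat} (a b : C) (y : Vec m) : vcons a y = vcons b y -> a = b.
Proof. intros E. exact (f_equal (fun v => v Fin.F1) E). Qed.

Lemma vcons_inj2 {m : nat} (x : C) (y y' : Vec m) : vcons x y = vcons x y' -> y = y'.
Proof. intros E. apply functional_extensionality. intros j. exact (f_equal (fun v => v (Fin.FS j)) E). Qed.

Lemma slice_holo_h {m : nat} (K1 : C -> Prop) (K2 : Vec m -> Prop) (F : Vec (S m) -> C) :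
  A_D (prodset K1 K2) F -> forall x c r phi, K1 x -> 0 < r ->
  holoV_on (ballC c r) phi -> injective_on (ballC c r) phi -> (forall z, ballC c r z -> K2 (phi z)) ->
  holo_on (ballC c r) (fun z => F (vcons x (phi z))).
Proof.
  intros [_ hF] x c r phi Kx Hr Hphi Hinj Himg.
  apply (hF c r (fun z => vcons x (phi z)) Hr).
  - intros i. pattern i. apply Fin.caseS'.
    + simpl. apply holo_const.
    + intros j. simpl. apply Hphi.
  - intros a b Ha Hb E. apply Hinj; auto. eapply vcons_inj2; eauto.
  - intros z Hz. exists x, (phi z). repeat split; auto.
Qed.

Lemma slice_holo_v {m : nat} (K1 : C -> Prop) (K2 : Vec m -> Prop) (F : Vec (S m) -> C) :
  A_D (prodset K1 K2) F -> forall y c r, K2 y -> 0 < r -> (forall z, ballC c r z -> K1 z) ->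
  holo_on (ballC c r) (fun z => F (vcons z y)).
Proof.
  intros [_ hF] y c r Ky Hr Hsub.
  apply (hF c r (fun z => vcons z y) Hr).
  - intros i. pattern i. apply Fin.caseS'.
    + simpl. apply holo_id.
    + intros j. simpl. apply holo_const.
  - intros a b Ha Hb E. eapply vcons_inj1; eauto.
  - intros z Hz. exists z, y. repeat split; auto.
Qed.

Lemma F_cont {m : nat} (K1 : C -> Prop) (K2 : Vec m -> Prop) (F : Vec (S m) -> C) :
  A_D (prodset K1 K2) F -> forall x y, K1 x -> K2 y -> forall eps, 0 < eps -> exists delta, 0 < delta /\
  forall x' y', K1 x' -> K2 y' -> Cmod (x' - x) < delta -> ballV y delta y' ->
    Cmod (F (vcons x' y') - F (vcons x y)) < eps.
Proof.
  intros [hC _] x y Kx Ky eps He.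
  destruct (hC (vcons x y) ltac:(exists x, y; auto) eps He) as [d [Hd H]].
  exists d. split; auto. intros x' y' Kx' Ky' H1 H2.
  apply (H (vcons x' y')). exists x', y'; auto. apply ballV_vcons; auto.
Qed.

Lemma Cmod_self (x : C) : Cmod (x - x) = 0.
Proof. replace (x - x)%C with (RtoC 0) by ring. apply Cmod_0. Qed.

Lemma slice_AD {m : nat} (K1 : C -> Prop) (K2 : Vec m -> Prop) (F : Vec (S m) -> C) :
  A_D (prodset K1 K2) F -> forall x, K1 x -> A_D K2 (fun y => F (vcons x y)).
Proof.
  intros hF x Kx. split.
  - intros y Ky eps He. destruct (F_cont K1 K2 F hF x y Kx Ky eps He) as [d [Hd H]].
    exists d. split; auto. intros y' Ky' Hy'. apply H; auto. rewrite Cmod_self. lra.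
  - intros c r phi Hr Hphi Hinj Himg. apply (slice_holo_h K1 K2 F hF x c r phi Kx Hr Hphi Hinj Himg).
Qed.

Lemma unif {m : nat} (K1 : C -> Prop) (K2 : Vec m -> Prop) (F : Vec (S m) -> C) :
  compactV K2 -> A_D (prodset K1 K2) F ->
  forall x, K1 x -> forall eps, 0 < eps -> exists delta, 0 < delta /\
  forall x', K1 x' -> Cmod (x' - x) < delta -> forall y, K2 y ->
    Cmod (F (vcons x' y) - F (vcons x y)) < eps.
Proof.
  intros hK2 hF x Kx eps He.
  set (P := fun (y : Vec m) (r : R) => forall x' y', K1 x' -> K2 y' -> Cmod (x' - x) < r -> ballV y r y' ->
     Cmod (F (vcons x' y') - F (vcons x y)) < eps / 2).
  destruct (cover (@ballV m) K2 hK2 (@ballV_tri m) (@ballV_refl m) P) as [l [Hl1 Hl2]].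
  { intros y Ky. destruct (F_cont K1 K2 F hF x y Kx Ky (eps / 2) ltac:(lra)) as [d [Hd H]].
    exists d. split; auto. }
  destruct (list_min l) as [d [Hd Hdl]]. { intros q Hq. apply (Hl1 q Hq). }
  exists d. split; auto. intros x' Kx' Hx' y Ky.
  destruct (Hl2 y Ky) as [q [Hq Hb]]. destruct (Hl1 q Hq) as [Kq [Hrq Pq]].
  pose proof (Hdl q Hq).
  pose proof (Pq x' y Kx' Ky ltac:(lra) Hb) as A1.
  pose proof (Pq x y Kx Ky ltac:(rewrite Cmod_self; lra) Hb) as A2.
  replace (F (vcons x' y) - F (vcons x y))%C with
    ((F (vcons x' y) - F (vcons x (fst q))) - (F (vcons x y) - F (vcons x (fst q))))%C by ring.
  eapply Rle_lt_trans. apply Cmod_triangle. rewrite Cmod_opp. lra.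
Qed.

Lemma bound {m : nat} (K1 : C -> Prop) (K2 : Vec m -> Prop) (F : Vec (S m) -> C) :
  compactC K1 -> compactV K2 -> A_D (prodset K1 K2) F ->
  exists M, forall x y, K1 x -> K2 y -> Cmod (F (vcons x y)) <= M.
Proof.
  intros hK1 hK2 hF.
  assert (Sa : forall x, K1 x -> exists Mx, forall y, K2 y -> Cmod (F (vcons x y)) <= Mx).
  { intros x Kx.
    set (P := fun (y : Vec m) (r : R) => forall y', K2 y' -> ballV y r y' ->
       Cmod (F (vcons x y') - F (vcons x y)) < 1).
    destruct (cover (@ballV m) K2 hK2 (@ballV_tri m) (@ballV_refl m) P) as [l [Hl1 Hl2]].
    { intros y Ky. destruct (F_cont K1 K2 F hF x y Kx Ky 1 ltac:(lra)) as [d [Hd H]].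
      exists d. split; auto. intros y' Ky' Hy'. apply H; auto. rewrite Cmod_self; lra. }
    destruct (list_max l (fun q => Cmod (F (vcons x (fst q))) + 1)) as [M HM].
    exists M. intros y Ky. destruct (Hl2 y Ky) as [q [Hq Hb]]. destruct (Hl1 q Hq) as [Kq [Hrq Pq]].
    pose proof (Pq y Ky Hb). pose proof (HM q Hq). simpl in *.
    replace (F (vcons x y)) with ((F (vcons x y) - F (vcons x (fst q))) + F (vcons x (fst q)))%C by ring.
    eapply Rle_trans. apply Cmod_triangle. lra. }
  set (P := fun (x : C) (r : R) => exists M', forall x', K1 x' -> Cmod (x' - x) < r ->
     forall y, K2 y -> Cmod (F (vcons x' y)) <= M').
  destruct (cover ballC K1 hK1 ballC_tri ballC_refl P) as [l [Hl1 Hl2]].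
  { intros x Kx. destruct (unif K1 K2 F hK2 hF x Kx 1 ltac:(lra)) as [d [Hd H]].
    destruct (Sa x Kx) as [Mx HMx]. exists d. split; auto. exists (Mx + 1).
    intros x' Kx' Hx' y Ky. pose proof (H x' Kx' Hx' y Ky). pose proof (HMx y Ky).
    replace (F (vcons x' y)) with ((F (vcons x' y) - F (vcons x y)) + F (vcons x y))%C by ring.
    eapply Rle_trans. apply Cmod_triangle. lra. }
  destruct (list_max_ex l (fun q M' => forall x', K1 x' -> Cmod (x' - fst q) < snd q ->
     forall y, K2 y -> Cmod (F (vcons x' y)) <= M')) as [M HM].
  { intros q Hq. apply (Hl1 q Hq). }
  exists M. intros x y Kx Ky. destruct (Hl2 x Kx) as [q [Hq Hb]].
  destruct (HM q Hq) as [M' [H1 H2]]. rewrite ballC_iff in Hb.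
  pose proof (H1 x Kx Hb y Ky). lra.
Qed.

Lemma fin_min (n : nat) (P : Fin.t n -> R -> Prop) :
  (forall i, exists d, 0 < d /\ forall d', 0 < d' <= d -> P i d') ->
  exists d, 0 < d /\ forall i, forall d', 0 < d' <= d -> P i d'.
Proof.
  induction n as [|n IH]; intros H.
  - exists 1. split; [lra|]. intros i. inversion i.
  - destruct (IH (fun j => P (Fin.FS j)) (fun j => H (Fin.FS j))) as [d2 [Hd2 H2]].
    destruct (H Fin.F1) as [d1 [Hd1 H1]].
    exists (Rmin d1 d2). split. apply Rmin_pos; auto.
    intros i. pattern i. apply Fin.caseS'.
    + intros d' Hd'. apply H1. pose proof (Rmin_l d1 d2). lra.
    + intros j d' Hd'. apply H2. pose proof (Rmin_r d1 d2). lra.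
Qed.

Lemma phi_cont {m : nat} (c : C) r (phi : C -> Vec m) z :
  holoV_on (ballC c r) phi -> ballC c r z ->
  forall eps, 0 < eps -> exists d, 0 < d /\ forall z', Cmod (z' - z) < d -> ballV (phi z) eps (phi z').
Proof.
  intros Hphi Hz eps He.
  destruct (fin_min m (fun i d => forall z', Cmod (z' - z) < d -> Cmod (phi z' i - phi z i) < eps)) as [d [Hd H]].
  { intros i. destruct (holo_Dz c r (fun z => phi z i) z (Hphi i) Hz) as [l Hl].
    destruct (Dz_cont _ _ _ Hl eps He) as [d [Hd H]]. exists d. split; auto.
    intros d' Hd' z' Hz'. apply H. lra. }
  exists d. split; auto. intros z' Hz'. rewrite ballV_iff. intros i. apply (H i d); auto. lra.
Qed.

Lemma sq_close (z c : C) r : fst c - r <= fst z <= fst c + r -> snd c - r <= snd z <= snd c + r ->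
  Cmod (z - c) <= 2 * r.
Proof.
  intros H1 H2. eapply Rle_trans. apply Cmod_le_sum. destruct z, c. unfold Cminus, Cplus, Copp; simpl in *.
  unfold Rabs; repeat destruct Rcase_abs; lra.
Qed.

Lemma onSq_close (z c : C) r : 0 <= r -> onSq c r z -> Cmod (z - c) <= 2 * r.
Proof. intros Hr Hz. apply sq_close; unfold onSq, onB in Hz; lra. Qed.

Lemma shift_pt (x0 : C) t : 0 < t -> Cmod ((x0 + (t, 0)) - x0) = t.
Proof.
  intros Ht. replace ((x0 + (t, 0)) - x0)%C with (RtoC t).
  rewrite Cmod_R. apply Rabs_right; lra.
  unfold RtoC, Cminus, Cplus, Copp; Csplit; ring.
Qed.

Definition Gf {m : nat} (F : Vec (S m) -> C) (x0 : C) (r : R) (y : Vec m) : C :=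
  (Sq (fun z => F (vcons z y) * (/ (z - x0) * / (z - x0)))%C x0 r / J0)%C.

Lemma DQ_unif {m : nat} (K1 : C -> Prop) (K2 : Vec m -> Prop) (F : Vec (S m) -> C) x0 rho M :
  A_D (prodset K1 K2) F -> 0 < rho -> (forall z, ballC x0 rho z -> K1 z) ->
  (forall x y, K1 x -> K2 y -> Cmod (F (vcons x y)) <= M) ->
  forall eps, 0 < eps -> exists delta, 0 < delta /\ forall x, K1 x -> 0 < Cmod (x - x0) < delta ->
    forall y, K2 y -> Cmod ((F (vcons x y) - F (vcons x0 y)) / (x - x0) - Gf F x0 (rho / 4) y) < eps.
Proof.
  intros hF Hrho Hsub HM eps He.
  set (r := rho / 4). assert (Hr : 0 < r) by (unfold r; lra).
  set (delta := Rmin (r / 2) (eps * (r * r) / (4 * (Rabs M + 1)))).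
  assert (HA : 0 <= Rabs M) by apply Rabs_pos.
  assert (Hd : 0 < delta).
  { unfold delta. apply Rmin_pos; [lra|]. apply Rdiv_lt_0_compat; [| lra]. apply Rmult_lt_0_compat; nra. }
  exists delta. split; auto. intros x Kx Hx y Ky.
  assert (Hx1 : Cmod (x - x0) < r / 2) by (pose proof (Rmin_l (r / 2) (eps * (r * r) / (4 * (Rabs M + 1)))); unfold delta in Hx; lra).
  assert (Hx2 : Cmod (x - x0) < eps * (r * r) / (4 * (Rabs M + 1))) by
    (pose proof (Rmin_r (r / 2) (eps * (r * r) / (4 * (Rabs M + 1)))); unfold delta in Hx; lra).
  set (g := fun z => F (vcons z y)).
  assert (Hg : forall z, Cmod (z - x0) <= 2 * r -> exists l, Dz g z l).
  { intros z Hz. apply (holo_Dz x0 rho). apply (slice_holo_v K1 K2 F hF y x0 rho Ky Hrho Hsub).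
    rewrite ballC_iff. unfold r in Hz. lra. }
  assert (Hsq : forall z, onSq x0 r z -> Cmod (z - x0) <= 2 * r) by (intros; apply onSq_close; auto; lra).
  pose proof (DQ_est g x0 r M Hr) as D.
  eapply Rle_lt_trans. apply D.
  - intros z Hz. destruct (Hg z (Hsq z Hz)) as [l Hl]. eapply Dz_cont; eauto.
  - intros z Hz. apply HM; auto. apply Hsub. rewrite ballC_iff. pose proof (Hsq z Hz). unfold r in *. lra.
  - intros w Hw. apply CIFp_of_Dz; auto; [| lra]. intros z H1 H2. apply Hg. apply sq_close; auto.
  - lra.
  - assert (4 * M * Cmod (x - x0) <= 4 * (Rabs M + 1) * Cmod (x - x0)).
    { apply Rmult_le_compat_r. apply Cmod_ge_0. pose proof (Rle_abs M). lra. }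
    apply Rle_lt_trans with (4 * (Rabs M + 1) * Cmod (x - x0) / (r * r)).
    { unfold Rdiv. apply Rmult_le_compat_r; auto. apply Rlt_le, Rinv_0_lt_compat. nra. }
    apply Rmult_lt_compat_l with (r := 4 * (Rabs M + 1)) in Hx2; [|lra].
    replace (4 * (Rabs M + 1) * (eps * (r * r) / (4 * (Rabs M + 1)))) with (eps * (r * r)) in Hx2 by (field; lra).
    apply (Rmult_lt_reg_r (r * r)); [nra|]. unfold Rdiv. rewrite Rmult_assoc, Rinv_l by nra. lra.
Qed.

Lemma G_bound {m : nat} (K1 : C -> Prop) (K2 : Vec m -> Prop) (F : Vec (S m) -> C) x0 rho M :
  A_D (prodset K1 K2) F -> 0 < rho -> (forall z, ballC x0 rho z -> K1 z) ->
  (forall x y, K1 x -> K2 y -> Cmod (F (vcons x y)) <= M) ->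
  forall y, K2 y -> Cmod (Gf F x0 (rho / 4) y) <= 2 * M / (rho / 4).
Proof.
  intros hF Hrho Hsub HM y Ky.
  set (r := rho / 4). assert (Hr : 0 < r) by (unfold r; lra).
  assert (Hsq : forall z, onSq x0 r z -> Cmod (z - x0) <= 2 * r) by (intros; apply onSq_close; auto; lra).
  assert (HK : forall z, onSq x0 r z -> K1 z).
  { intros z Hz. apply Hsub. rewrite ballC_iff. pose proof (Hsq z Hz). unfold r in *. lra. }
  assert (Nz : forall z, onSq x0 r z -> z <> x0).
  { intros z Hz E. pose proof (onSq_far x0 z r Hr Hz). rewrite E, Cmod_self in H. lra. }
  unfold Gf, Sq. pose proof J0_ne. pose proof J0_bound. rewrite Cmod_div by auto.
  assert (B : Cmod (RI (fun z => F (vcons z y) * (/ (z - x0) * / (z - x0)))%C (fst x0 - r) (fst x0 + r) (snd x0 - r) (snd x0 + r))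
     <= 2 * (M * (/ r * / r)) * ((fst x0 + r - (fst x0 - r)) + (snd x0 + r - (snd x0 - r)))).
  { apply RI_bound; try lra.
    - intros z Hz. apply Cc_mult.
      + destruct (holo_Dz x0 rho (fun z => F (vcons z y)) z) as [l Hl].
        apply (slice_holo_v K1 K2 F hF y x0 rho Ky Hrho Hsub).
        rewrite ballC_iff. pose proof (Hsq z Hz). unfold r in *. lra.
        eapply Dz_cont; eauto.
      + apply Cc_mult; apply Cc_kw; apply Nz; auto.
    - intros z Hz. rewrite !Cmod_mult. rewrite !Cmod_inv by (apply sub_ne0, Nz; auto).
      pose proof (onSq_far x0 z r Hr Hz). pose proof (HM z y (HK z Hz) Ky).
      assert (/ Cmod (z - x0) <= / r) by (apply Rinv_le_contravar; auto).
      assert (0 <= / Cmod (z - x0)) by (apply Rlt_le, Rinv_0_lt_compat; lra).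
      apply Rmult_le_compat; auto. apply Cmod_ge_0. apply Rmult_le_pos; auto.
      apply Rmult_le_compat; auto. }
  replace (2 * (M * (/ r * / r)) * ((fst x0 + r - (fst x0 - r)) + (snd x0 + r - (snd x0 - r)))) with (8 * M / r) in B
    by (field; lra).
  fold r.
  set (S0 := Cmod (RI _ _ _ _ _)) in *.
  assert (0 <= S0) by apply Cmod_ge_0.
  assert (S0 / Cmod J0 <= S0 / 4) by (unfold Rdiv; apply Rmult_le_compat_l; auto; apply Rinv_le_contravar; lra).
  assert (S0 / 4 <= 2 * M / r) by (replace (2 * M / r) with ((8 * M / r) / 4) by (field; lra); unfold Rdiv at 1 2; lra).
  lra.
Qed.

Lemma G_cont {m : nat} (K1 : C -> Prop) (K2 : Vec m -> Prop) (F : Vec (S m) -> C) x0 rho M :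
  A_D (prodset K1 K2) F -> 0 < rho -> (forall z, ballC x0 rho z -> K1 z) ->
  (forall x y, K1 x -> K2 y -> Cmod (F (vcons x y)) <= M) ->
  forall y, K2 y -> forall eps, 0 < eps -> exists delta, 0 < delta /\
    forall y', K2 y' -> ballV y delta y' -> Cmod (Gf F x0 (rho / 4) y' - Gf F x0 (rho / 4) y) < eps.
Proof.
  intros hF Hrho Hsub HM y Ky eps He.
  destruct (DQ_unif K1 K2 F x0 rho M hF Hrho Hsub HM (eps / 3) ltac:(lra)) as [d0 [Hd0 HU]].
  set (t := Rmin d0 rho / 2).
  assert (Ht : 0 < t) by (unfold t; apply Rdiv_lt_0_compat; [apply Rmin_pos|]; lra).
  assert (Ht1 : t < d0) by (unfold t; pose proof (Rmin_l d0 rho); lra).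
  assert (Ht2 : t < rho) by (unfold t; pose proof (Rmin_r d0 rho); lra).
  set (x := (x0 + (t, 0))%C).
  assert (Hxd : Cmod (x - x0) = t) by (apply shift_pt; auto).
  assert (Kx : K1 x) by (apply Hsub; rewrite ballC_iff; lra).
  assert (Kx0 : K1 x0) by (apply Hsub; rewrite ballC_iff, Cmod_self; lra).
  destruct (F_cont K1 K2 F hF x y Kx Ky (eps * t / 6) ltac:(apply Rdiv_lt_0_compat; [nra| lra])) as [d1 [Hd1 H1]].
  destruct (F_cont K1 K2 F hF x0 y Kx0 Ky (eps * t / 6) ltac:(apply Rdiv_lt_0_compat; [nra| lra])) as [d2 [Hd2 H2]].
  exists (Rmin d1 d2). split. apply Rmin_pos; auto.
  intros y' Ky' Hy'.
  assert (B1 : ballV y d1 y').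
  { rewrite ballV_iff in *. intros i. pose proof (Hy' i). pose proof (Rmin_l d1 d2). lra. }
  assert (B2 : ballV y d2 y').
  { rewrite ballV_iff in *. intros i. pose proof (Hy' i). pose proof (Rmin_r d1 d2). lra. }
  pose proof (H1 x y' Kx Ky' ltac:(rewrite Cmod_self; lra) B1) as A1.
  pose proof (H2 x0 y' Kx0 Ky' ltac:(rewrite Cmod_self; lra) B2) as A2.
  pose proof (HU x Kx ltac:(lra) y' Ky') as U1.
  pose proof (HU x Kx ltac:(lra) y Ky) as U2.
  assert (Nx : (x - x0)%C <> RtoC 0) by (intros E; rewrite E, Cmod_0 in Hxd; lra).
  set (D := fun v => ((F (vcons x v) - F (vcons x0 v)) / (x - x0))%C) in *.
  assert (U3 : Cmod (D y' - D y) < eps / 3).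
  { unfold D. replace ((F (vcons x y') - F (vcons x0 y')) / (x - x0) - (F (vcons x y) - F (vcons x0 y)) / (x - x0))%C
      with (((F (vcons x y') - F (vcons x y)) - (F (vcons x0 y') - F (vcons x0 y))) / (x - x0))%C by (field; auto).
    rewrite Cmod_div by auto. rewrite Hxd.
    apply (Rmult_lt_reg_r t); auto. unfold Rdiv. rewrite Rmult_assoc, Rinv_l, Rmult_1_r by lra.
    eapply Rle_lt_trans. apply Cmod_triangle. rewrite Cmod_opp. lra. }
  replace (Gf F x0 (rho / 4) y' - Gf F x0 (rho / 4) y)%C with
    (- (D y' - Gf F x0 (rho / 4) y') + (D y' - D y) + (D y - Gf F x0 (rho / 4) y))%C by ring.
  eapply Rle_lt_trans. apply Cmod_triangle.
  eapply Rle_lt_trans. apply Rplus_le_compat_r. apply Cmod_triangle. rewrite Cmod_opp.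
  unfold D in *. lra.
Qed.

Lemma G_holo {m : nat} (K1 : C -> Prop) (K2 : Vec m -> Prop) (F : Vec (S m) -> C) x0 rho M :
  A_D (prodset K1 K2) F -> 0 < rho -> (forall z, ballC x0 rho z -> K1 z) ->
  (forall x y, K1 x -> K2 y -> Cmod (F (vcons x y)) <= M) ->
  forall c' r' phi, 0 < r' -> holoV_on (ballC c' r') phi -> injective_on (ballC c' r') phi ->
  (forall z, ballC c' r' z -> K2 (phi z)) ->
  holo_on (ballC c' r') (fun z => Gf F x0 (rho / 4) (phi z)).
Proof.
  intros hF Hrho Hsub HM c' r' phi Hr' Hphi Hinj Himg.
  rewrite holo_iff. intros z0 Hz0. pose proof Hz0 as Hz0'. rewrite ballC_iff in Hz0'.
  set (s := (r' - Cmod (z0 - c')) / 4).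
  assert (Hs : 0 < s) by (unfold s; lra).
  assert (inD : forall z, Cmod (z - z0) <= 2 * s -> ballC c' r' z).
  { intros z Hz. rewrite ballC_iff. pose proof (Cmod_tri3 c' z0 z). unfold s in Hz. lra. }
  set (G := Gf F x0 (rho / 4)).
  set (MG := 2 * M / (rho / 4)).
  set (g := fun z => G (phi z)).
  assert (Cg : forall z, ballC c' r' z -> Cc g z).
  { intros z Hz eps He. pose proof Hz as Hz'. rewrite ballC_iff in Hz'.
    destruct (G_cont K1 K2 F x0 rho M hF Hrho Hsub HM (phi z) (Himg z Hz) eps He) as [d1 [Hd1 H1]].
    destruct (phi_cont c' r' phi z Hphi Hz d1 Hd1) as [d2 [Hd2 H2]].
    exists (Rmin d2 (r' - Cmod (z - c'))). split. apply Rmin_pos; lra.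
    intros z' Hz''. pose proof (Rmin_l d2 (r' - Cmod (z - c'))). pose proof (Rmin_r d2 (r' - Cmod (z - c'))).
    apply H1. apply Himg. rewrite ballC_iff. pose proof (Cmod_tri3 c' z z'). lra.
    apply H2. lra. }
  assert (HCsq : forall z, onSq z0 s z -> Cc g z).
  { intros z Hz. apply Cg, inD, onSq_close; auto; lra. }
  assert (HMsq : forall z, onSq z0 s z -> Cmod (g z) <= MG).
  { intros z Hz. apply (G_bound K1 K2 F x0 rho M hF Hrho Hsub HM). apply Himg, inD, onSq_close; auto; lra. }
  assert (HCIF : forall w, Cmod (w - z0) < s / 2 -> CIFp g z0 s w).
  { intros w Hw. apply CIFp_limit; auto.
    intros eps He.
    destruct (DQ_unif K1 K2 F x0 rho M hF Hrho Hsub HM eps He) as [d0 [Hd0 HU]].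
    set (t := Rmin d0 rho / 2).
    assert (Ht : 0 < t) by (unfold t; apply Rdiv_lt_0_compat; [apply Rmin_pos|]; lra).
    assert (Ht1 : t < d0) by (unfold t; pose proof (Rmin_l d0 rho); lra).
    assert (Ht2 : t < rho) by (unfold t; pose proof (Rmin_r d0 rho); lra).
    set (x := (x0 + (t, 0))%C).
    assert (Hxd : Cmod (x - x0) = t) by (apply shift_pt; auto).
    assert (Kx : K1 x) by (apply Hsub; rewrite ballC_iff; lra).
    assert (Kx0 : K1 x0) by (apply Hsub; rewrite ballC_iff, Cmod_self; lra).
    set (h := fun z => ((F (vcons x (phi z)) - F (vcons x0 (phi z))) / (x - x0))%C).
    assert (Dh : forall z, ballC c' r' z -> exists l, Dz h z l).
    { intros z Hz.
      destruct (holo_Dz c' r' _ z (slice_holo_h K1 K2 F hF x c' r' phi Kx Hr' Hphi Hinj Himg) Hz) as [l1 Hl1].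
      destruct (holo_Dz c' r' _ z (slice_holo_h K1 K2 F hF x0 c' r' phi Kx0 Hr' Hphi Hinj Himg) Hz) as [l0 Hl0].
      eexists. apply (Dz_ext (fun z => (F (vcons x (phi z)) - F (vcons x0 (phi z))) * (fun _ => / (x - x0)) z)%C).
      { intros; reflexivity. }
      apply Dz_mult. apply Dz_minus; eauto. apply Dz_const. }
    exists h. repeat split.
    - intros z Hz. destruct (Dh z) as [l Hl]. apply inD, onSq_close; auto; lra. eapply Dz_cont; eauto.
    - apply CIFp_of_Dz; auto; [| lra]. intros z H1 H2. apply Dh, inD, sq_close; auto.
    - apply Rlt_le. unfold h, g, G. apply HU; auto. lra. apply Himg, inD. lra.
    - intros z Hz. apply Rlt_le. unfold h, g, G. apply HU; auto. lra. apply Himg, inD, onSq_close; auto; lra. }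
  exists (Sq (fun z => g z * (/ (z - z0) * / (z - z0)))%C z0 s / J0)%C.
  intros eps He.
  set (delta := Rmin (s / 2) (eps * (s * s) / (4 * (Rabs MG + 1)))).
  assert (HA : 0 <= Rabs MG) by apply Rabs_pos.
  assert (Hd : 0 < delta).
  { unfold delta. apply Rmin_pos; [lra|]. apply Rdiv_lt_0_compat; [| lra]. apply Rmult_lt_0_compat; nra. }
  exists delta. split; auto. intros z Hz Hzz.
  assert (Hx1 : Cmod (z - z0) < s / 2) by (pose proof (Rmin_l (s / 2) (eps * (s * s) / (4 * (Rabs MG + 1)))); unfold delta in Hzz; lra).
  assert (Hx2 : Cmod (z - z0) < eps * (s * s) / (4 * (Rabs MG + 1))) by
    (pose proof (Rmin_r (s / 2) (eps * (s * s) / (4 * (Rabs MG + 1)))); unfold delta in Hzz; lra).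
  eapply Rle_lt_trans. apply (DQ_est g z0 s MG Hs HCsq HMsq HCIF z). lra.
  assert (4 * MG * Cmod (z - z0) <= 4 * (Rabs MG + 1) * Cmod (z - z0)).
  { apply Rmult_le_compat_r. apply Cmod_ge_0. pose proof (Rle_abs MG). lra. }
  apply Rle_lt_trans with (4 * (Rabs MG + 1) * Cmod (z - z0) / (s * s)).
  { unfold Rdiv. apply Rmult_le_compat_r; auto. apply Rlt_le, Rinv_0_lt_compat. nra. }
  apply Rmult_lt_compat_l with (r := 4 * (Rabs MG + 1)) in Hx2; [|lra].
  replace (4 * (Rabs MG + 1) * (eps * (s * s) / (4 * (Rabs MG + 1)))) with (eps * (s * s)) in Hx2 by (field; lra).
  apply (Rmult_lt_reg_r (s * s)); [nra|]. unfold Rdiv. rewrite Rmult_assoc, Rinv_l by nra. lra.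
Qed.

Import Pilot.Defs.
Open Scope R_scope.

Theorem mainTheorem12 (m : nat) (K1 : Cx -> Prop) (K2 : Vec m -> Prop)
  (hK1 : compactC K1) (hK2 : compactV K2)
  (F : Vec (S m) -> Cx) (hF : A_D (prodset K1 K2) F) :
  (* each slice F(x, .) lies in A_D(K2) *)
  (forall x, K1 x -> A_D K2 (fun y => F (vcons x y))) /\
  (* x |-> F(x, .) is continuous K1 -> (A_D(K2), sup norm) *)
  (forall x0, K1 x0 -> forall eps, 0 < eps -> exists delta, 0 < delta /\
     forall x, K1 x -> Cabs (Csub x x0) < delta ->
       forall y, K2 y -> Cabs (Csub (F (vcons x y)) (F (vcons x0 y))) < eps) /\
  (* x |-> F(x, .) is holomorphic on the interior of K1 as an A_D(K2)-valued map *)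
  (forall x0, interiorC K1 x0 ->
     exists G : Vec m -> Cx, A_D K2 G /\
       forall eps, 0 < eps -> exists delta, 0 < delta /\
         forall x, K1 x -> 0 < Cabs (Csub x x0) < delta ->
           forall y, K2 y ->
             Cabs (Csub (Cdiv (Csub (F (vcons x y)) (F (vcons x0 y))) (Csub x x0)) (G y)) < eps).
Proof.
  split; [|split].
  - intros x Kx. exact (slice_AD K1 K2 F hF x Kx).
  - intros x0 Kx0 eps He. destruct (unif K1 K2 F hK2 hF x0 Kx0 eps He) as [d [Hd H]].
    exists d. split; [exact Hd|]. intros x Kx Hx y Ky. exact (H x Kx Hx y Ky).
  - intros x0 [rho [Hrho Hsub]]. destruct (bound K1 K2 F hK1 hK2 hF) as [M HM].
    exists (Gf F x0 (rho / 4)). split.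
    + split.
      * intros y Ky eps He. exact (G_cont K1 K2 F x0 rho M hF Hrho Hsub HM y Ky eps He).
      * intros c r phi Hr Hphi Hinj Himg. exact (G_holo K1 K2 F x0 rho M hF Hrho Hsub HM c r phi Hr Hphi Hinj Himg).
    + intros eps He. exact (DQ_unif K1 K2 F x0 rho M hF Hrho Hsub HM eps He).
Qed.
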